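(* Let $\mathcal{F}=(f_s:I_s\to[n]\mid s\in S)$ be an $S$-claw in $\Delta$. The image of $\mathcal{F}$ under the canonical functor $\Delta\to\Lambda$ is strongly biCartesian in $\Lambda$ (i.e. it extends to a strongly Cartesian $S$-cube in $\Lambda$, and this cube is also strongly coCartesian) if and only if $\mathcal{F}$ is cyclically compatible.
   Context: $\Delta$: simplex category of nonempty finite linear orders $[n]=\{0<\dots<n\}$, weakly monotone maps. $\Lambda$: Connes' cyclic category (objects the cyclic sets $\langle n\rangle=(\mathbb{Z}/(n+1),+1)$); the canonical functor $\Delta\to\Lambda$, $[n]\mapsto\langle n\rangle$, identifies $\Delta$ with the slice $\Lambda_{/\langle0\rangle}$ and is the forgetful functor. An $S$-cube is a functor $\mathcal{P}(S)^{\mathrm{op}}\to\mathcal{D}$ from the opposite of the subset poset of $S$; it is strongly Cartesian / strongly coCartesian if all squares $Q(T\cup\{s,s'\})\to Q(T\cup\{s\}),Q(T\cup\{s'\})\to Q(T)$ ($s\ne s'\notin T$) are pullbacks / pushouts. An $S$-claw on $[n]$ is a family of morphisms $f_s:I_s\to[n]$. It is compatible if (BC1) for each $i\in[n]$ at most one $s$ has $f_s^{-1}\{i\}$ not a singleton, and (BC2) for each $0<i\le n$ at most one $s$ has $\{i-1,i\}\not\subseteq f_s(I_s)$. It is cyclically compatible if it is compatible and all but at most one $s\in S$ satisfy $\{0,n\}\subseteq f_s(I_s)$. *)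

(* Defs.v *)
(* Connes' cyclic category Lambda, modelled concretely:
   object <n> (n : nat) = Z/(n+1); a morphism <m> -> <n> is an equivalence
   class of nondecreasing maps g : Z -> Z with g (x + (m+1)) = g x + (n+1),
   two such maps being identified iff they differ by a multiple of (n+1). *)
From mathcomp Require Import all_boot all_algebra.
Set Implicit Arguments. Unset Strict Implicit. Unset Printing Implicit Defensive.
Import GRing.Theory Num.Theory.
Local Open Scope ring_scope.

Definition lam_hom (m n : nat) (g : int -> int) : Prop :=
  (forall x y : int, x <= y -> g x <= g y) /\
  (forall x : int, g (x + (m.+1)%:Z) = g x + (n.+1)%:Z).

Definition lam_eq (n : nat) (g h : int -> int) : Prop :=
  exists k : int, forall x : int, h x = g x + k * (n.+1)%:Z.

Definition lam_pullback (a b c d : nat) (p q r t : int -> int) : Prop :=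
  lam_eq d (r \o p) (t \o q) /\
  forall (x : nat) (u v : int -> int),
    lam_hom x b u -> lam_hom x c v -> lam_eq d (r \o u) (t \o v) ->
    exists w : int -> int,
      [/\ lam_hom x a w, lam_eq b (p \o w) u, lam_eq c (q \o w) v &
          forall w' : int -> int, lam_hom x a w' -> lam_eq b (p \o w') u ->
            lam_eq c (q \o w') v -> lam_eq a w w'].

Definition lam_pushout (a b c d : nat) (p q r t : int -> int) : Prop :=
  lam_eq d (r \o p) (t \o q) /\
  forall (x : nat) (u v : int -> int),
    lam_hom b x u -> lam_hom c x v -> lam_eq x (u \o p) (v \o q) ->
    exists w : int -> int,
      [/\ lam_hom d x w, lam_eq x (w \o r) u, lam_eq x (w \o t) v &
          forall w' : int -> int, lam_hom d x w' -> lam_eq x (w' \o r) u ->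
            lam_eq x (w' \o t) v -> lam_eq x w w'].

(* an S-cube in Lambda: a functor P(S)^op -> Lambda; T \subset T' gives
   the arrow mor T T' : ob T' -> ob T *)
Definition lam_cube (S : finType) (ob : {set S} -> nat)
    (mor : {set S} -> {set S} -> int -> int) : Prop :=
  [/\ forall T T' : {set S}, T \subset T' -> lam_hom (ob T') (ob T) (mor T T'),
      forall T : {set S}, lam_eq (ob T) id (mor T T) &
      forall T T' T'' : {set S}, T \subset T' -> T' \subset T'' ->
        lam_eq (ob T) (mor T T' \o mor T' T'') (mor T T'')].

Definition strongly_cartesian (S : finType) (ob : {set S} -> nat)
    (mor : {set S} -> {set S} -> int -> int) : Prop :=
  forall (T : {set S}) (s s' : S), s != s' -> s \notin T -> s' \notin T ->
    lam_pullback (ob (s |: (s' |: T))) (ob (s |: T)) (ob (s' |: T)) (ob T)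
      (mor (s |: T) (s |: (s' |: T))) (mor (s' |: T) (s |: (s' |: T)))
      (mor T (s |: T)) (mor T (s' |: T)).

Definition strongly_cocartesian (S : finType) (ob : {set S} -> nat)
    (mor : {set S} -> {set S} -> int -> int) : Prop :=
  forall (T : {set S}) (s s' : S), s != s' -> s \notin T -> s' \notin T ->
    lam_pushout (ob (s |: (s' |: T))) (ob (s |: T)) (ob (s' |: T)) (ob T)
      (mor (s |: T) (s |: (s' |: T))) (mor (s' |: T) (s |: (s' |: T)))
      (mor T (s |: T)) (mor T (s' |: T)).

Definition delta_hom (m n : nat) (f : 'I_m.+1 -> 'I_n.+1) : Prop :=
  forall i j : 'I_m.+1, (i <= j)%N -> (f i <= f j)%N.

(* the canonical functor Delta -> Lambda on morphisms:
   x = q (m+1) + r  |->  q (n+1) + f r *)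
Definition delta_to_lam (m n : nat) (f : 'I_m.+1 -> 'I_n.+1) : int -> int :=
  fun x => ((f (inord (absz (modz x (m.+1)%:Z))) : nat)%:Z
            + divz x (m.+1)%:Z * (n.+1)%:Z).

Definition extends_claw (S : finType) (n : nat) (m : S -> nat)
    (f : forall s : S, 'I_(m s).+1 -> 'I_n.+1) (ob : {set S} -> nat)
    (mor : {set S} -> {set S} -> int -> int) : Prop :=
  ob set0 = n /\
  forall s : S, ob [set s] = m s /\
                lam_eq n (delta_to_lam (f s)) (mor set0 [set s]).

Definition at_most_one (S : finType) (P : S -> Prop) : Prop :=
  forall s s' : S, P s -> P s' -> s = s'.

Definition in_image (k n : nat) (f : 'I_k.+1 -> 'I_n.+1) (i : nat) : bool :=
  [exists j, (f j : nat) == i].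

Definition compatible (S : finType) (n : nat) (m : S -> nat)
    (f : forall s : S, 'I_(m s).+1 -> 'I_n.+1) : Prop :=
  (forall i : 'I_n.+1,
     at_most_one (fun s => #|[set j | f s j == i]| != 1%N)) /\
  (forall i : nat, (0 < i <= n)%N ->
     at_most_one (fun s => ~~ (in_image (f s) i.-1 && in_image (f s) i))).

Definition cyclically_compatible (S : finType) (n : nat) (m : S -> nat)
    (f : forall s : S, 'I_(m s).+1 -> 'I_n.+1) : Prop :=
  compatible f /\
  at_most_one (fun s => ~~ (in_image (f s) 0 && in_image (f s) n)).

(* Main.v *)
Require Import Defs.
From mathcomp Require Import all_boot all_algebra.
From mathcomp Require Import all_order zify.
From Stdlib Require Import ClassicalEpsilon.
Set Implicit Arguments. Unset Strict Implicit. Unset Printing Implicit Defensive.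
Import GRing.Theory Num.Theory Order.TTheory.
Local Open Scope ring_scope.
Lemma hom_shift (a b : nat) (g : int -> int) : lam_hom a b g ->
  forall (j : int) (x : int), g (x + j * a.+1%:Z) = g x + j * b.+1%:Z.
Proof.
case=> _ hg.
have hn : forall (j : nat) x, g (x + j%:Z * a.+1%:Z) = g x + j%:Z * b.+1%:Z.
  elim=> [|j IH] x; first by rewrite !mul0r !addr0.
  have -> : x + (j.+1)%:Z * a.+1%:Z = (x + j%:Z * a.+1%:Z) + a.+1%:Z.
    by lia.
  rewrite hg IH; lia.
case=> j x; first exact: hn.
rewrite NegzE.
have h := hn j.+1 (x - j.+1%:Z * a.+1%:Z).
rewrite subrK in h.
by rewrite mulNr h mulNr addrK.
Qed.

Definition kq (M : nat) (x : int) : int := (x %/ M.+1%:Z)%Z.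
Definition rq (M : nat) (x : int) : 'I_M.+1 := inord (absz (x %% M.+1%:Z)%Z).

Lemma rq_val (M : nat) (x : int) : ((rq M x : nat) : int) = (x %% M.+1%:Z)%Z.
Proof.
rewrite /rq inordK.
  by rewrite gez0_abs // modz_ge0.
have h1 := ltz_pmod x (ltz_nat 0 M.+1).
have h0 : 0 <= (x %% M.+1%:Z)%Z by rewrite modz_ge0.
rewrite -ltz_nat gez0_abs //.
Qed.

Lemma decomp (M : nat) (x : int) : x = kq M x * M.+1%:Z + (rq M x : nat)%:Z.
Proof. by rewrite rq_val /kq -divz_eq. Qed.

Lemma kq_rq (M : nat) (k : int) (r : 'I_M.+1) :
  kq M (k * M.+1%:Z + (r : nat)%:Z) = k /\ rq M (k * M.+1%:Z + (r : nat)%:Z) = r.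
Proof.
have hr : 0 <= (r : nat)%:Z < M.+1%:Z by rewrite ltz_nat ltn_ord.
split.
  rewrite /kq divzMDl // divz_small ?addr0 //.
apply: val_inj => /=.
apply/eqP; rewrite -eqz_nat; apply/eqP.
by rewrite rq_val modzMDl modz_small.
Qed.

Lemma dl_def (a b : nat) (phi : 'I_a.+1 -> 'I_b.+1) (x : int) :
  delta_to_lam phi x = kq a x * b.+1%:Z + (phi (rq a x) : nat)%:Z.
Proof. by rewrite /delta_to_lam addrC. Qed.

Lemma dl_form (a b : nat) (phi : 'I_a.+1 -> 'I_b.+1) (k : int) (r : 'I_a.+1) :
  delta_to_lam phi (k * a.+1%:Z + (r : nat)%:Z) = k * b.+1%:Z + (phi r : nat)%:Z.
Proof. by rewrite dl_def; case: (kq_rq k r) => -> ->. Qed.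

Lemma lex_le (M : nat) (k k' : int) (r r' : 'I_M.+1) :
  (k * M.+1%:Z + (r : nat)%:Z <= k' * M.+1%:Z + (r' : nat)%:Z) =
  (k < k') || ((k == k') && (r <= r')%N).
Proof.
have := ltn_ord r; have := ltn_ord r'.
move: (r : nat) (r' : nat) => x y hy hx.
apply/idP/idP.
  move=> h; nia.
move=> /orP [h|/andP [/eqP -> h]]; nia.
Qed.

Lemma lex_eq (M : nat) (k k' : int) (r r' : 'I_M.+1) :
  (k * M.+1%:Z + (r : nat)%:Z = k' * M.+1%:Z + (r' : nat)%:Z) -> k = k' /\ r = r'.
Proof.
move=> h.
have [h1 h2] := kq_rq k r.
have [h3 h4] := kq_rq k' r'.
split; first by rewrite -h1 -h3 h.
by rewrite -h2 -h4 h.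
Qed.

Lemma dl_hom (a b : nat) (phi : 'I_a.+1 -> 'I_b.+1) :
  delta_hom phi -> lam_hom a b (delta_to_lam phi).
Proof.
move=> hphi; split.
  move=> x y; rewrite [x in x <= _ -> _](decomp a) [y in _ <= y -> _](decomp a).
  rewrite !dl_def lex_le lex_le => /orP [->//|/andP [/eqP -> h]].
  by rewrite eqxx (hphi _ _ h) orbT.
move=> x; rewrite (decomp a x).
move: (kq a x) (rq a x) => k r.
have -> : k * a.+1%:Z + (r : nat)%:Z + a.+1%:Z =
   (k + 1) * a.+1%:Z + (r : nat)%:Z.
  by lia.
rewrite !dl_form; lia.
Qed.

Lemma dl_comp (a b c : nat) (phi : 'I_a.+1 -> 'I_b.+1) (psi : 'I_b.+1 -> 'I_c.+1) x :
  delta_to_lam (psi \o phi) x = delta_to_lam psi (delta_to_lam phi x).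
Proof.
rewrite (decomp a x); move: (kq a x) (rq a x) => k r.
by rewrite !dl_form.
Qed.

Lemma dl_ext (a b : nat) (phi psi : 'I_a.+1 -> 'I_b.+1) :
  phi =1 psi -> delta_to_lam phi =1 delta_to_lam psi.
Proof. by move=> h x; rewrite !dl_def h. Qed.

Lemma dl_id (a : nat) x : delta_to_lam (fun r : 'I_a.+1 => r) x = x.
Proof. by rewrite dl_def -decomp. Qed.
Lemma hom_mono (a b : nat) (g : int -> int) : lam_hom a b g -> forall x y, x <= y -> g x <= g y.
Proof. by case. Qed.

Lemma hom_eqv (a b : nat) (g : int -> int) : lam_hom a b g -> forall x, g (x + a.+1%:Z) = g x + b.+1%:Z.
Proof. by case. Qed.

Lemma mulD_inj (d : nat) (k1 k2 : int) : k1 * d.+1%:Z = k2 * d.+1%:Z -> k1 = k2.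
Proof. by move=> h; apply: (mulIf _ h). Qed.

Lemma pb_gen (a b c d : nat) (p q r t : int -> int) :
  lam_hom a b p -> lam_hom a c q -> lam_hom b d r -> lam_hom c d t ->
  (forall z, r (p z) = t (q z)) ->
  (forall be ga, r be = t ga -> exists al, p al = be /\ q al = ga) ->
  (forall al al', p al = p al' -> q al = q al' -> al = al') ->
  lam_pullback a b c d p q r t.
Proof.
move=> hp hq hr ht hc hJ hU; split.
  by exists 0 => z /=; rewrite mul0r addr0 hc.
move=> x u v hu hv [k hk].
pose v' z := v z + (- k) * c.+1%:Z.
have hv' : forall z, t (v' z) = r (u z).
  move=> z; rewrite /v' (hom_shift ht); have /= -> := hk z.
  by rewrite mulNr addrK.
have ex : forall z, exists al, (p al == u z) && (q al == v' z).
  move=> z; have [al [h1 h2]] := hJ _ _ (esym (hv' z)).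
  by exists al; rewrite h1 h2 !eqxx.
pose w z := xchoose (ex z).
have hw : forall z, p (w z) = u z /\ q (w z) = v' z.
  by move=> z; have /andP [/eqP -> /eqP ->] := xchooseP (ex z).
have hv'm : forall z z', z <= z' -> v' z <= v' z'.
  by move=> z z' h; rewrite /v' lerD2r; exact: (proj1 hv _ _ h).
have hv'e : forall z, v' (z + x.+1%:Z) = v' z + c.+1%:Z.
  by move=> z; rewrite /v' (hom_eqv hv) -!addrA [c.+1%:Z + _]addrC.
exists w; split.
- split.
    move=> z z' hzz'; rewrite leNgt; apply/negP => hlt.
    have hlt' := ltW hlt.
    have e1 : p (w z') = p (w z).
      apply: le_anti; rewrite ((proj1 hp _ _ hlt')) /=.
      by case: (hw z) => -> _; case: (hw z') => -> _; apply: (proj1 hu _ _ hzz').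
    have e2 : q (w z') = q (w z).
      apply: le_anti; rewrite ((proj1 hq _ _ hlt')) /=.
      by case: (hw z) => _ ->; case: (hw z') => _ ->; apply: hv'm.
    by move: hlt; rewrite (hU _ _ e1 e2) ltxx.
  move=> z; apply: hU.
    by rewrite (hom_eqv hp); case: (hw z) => -> _; case: (hw (z + x.+1%:Z)) => -> _; rewrite (hom_eqv hu).
  by rewrite (hom_eqv hq); case: (hw z) => _ ->; case: (hw (z + x.+1%:Z)) => _ ->; rewrite hv'e.
- by exists 0 => z /=; rewrite mul0r addr0; case: (hw z).
- exists k => z /=; case: (hw z) => _ ->.
  by rewrite /v' mulNr addrNK.
- move=> w' hw' [k1 h1] [k2 h2].
  have hk2 : k2 = k1 + k.
    have := hk 0; rewrite /= h1 h2 /= (hom_shift hr) (hom_shift ht) hc -addrA.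
    by move=> /addrI; rewrite -mulrDl => /mulD_inj.
  exists (- k1) => z.
  have -> : w z = w' z + k1 * a.+1%:Z.
    apply: hU.
      by rewrite (hom_shift hp) -h1; case: (hw z).
    rewrite (hom_shift hq); case: (hw z) => _ ->.
    rewrite /v' h2 hk2 -addrA; congr (_ + _).
    by rewrite mulrDl mulNr addrK.
  by rewrite mulNr addrK.
Qed.
Lemma po_gen (a b c d : nat) (p q r t : int -> int) :
  lam_hom a b p -> lam_hom a c q -> lam_hom b d r -> lam_hom c d t ->
  (forall z, r (p z) = t (q z)) ->
  (forall be ga, r be = t ga -> exists al, p al = be /\ q al = ga) ->
  (forall de, (exists be, r be = de) \/ (exists ga, t ga = de)) ->
  (forall b1 b2, r b1 = r b2 -> b1 <> b2 -> exists ga, t ga = r b1) ->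
  (forall g1 g2, t g1 = t g2 -> g1 <> g2 -> exists be, r be = t g1) ->
  (forall be ga, r be < t ga -> exists al, r be <= r (p al) /\ r (p al) <= t ga) ->
  (forall be ga, t ga < r be -> exists al, t ga <= r (p al) /\ r (p al) <= r be) ->
  lam_pushout a b c d p q r t.
Proof.
move=> hp hq hr ht hc hJ hK1 hK0r hK0t hK2r hK2t; split.
  by exists 0 => z /=; rewrite mul0r addr0 hc.
move=> x u v hu hv [k hk].
pose v' z := v z + (- k) * x.+1%:Z.
have hv' : forall z, v' (q z) = u (p z).
  by move=> z; rewrite /v'; have /= -> := hk z; rewrite mulNr addrK.
have hv'm : forall z z', z <= z' -> v' z <= v' z'.
  by move=> z z' h; rewrite /v' lerD2r; exact: (proj1 hv _ _ h).
have hv'e : forall z, v' (z + c.+1%:Z) = v' z + x.+1%:Z.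
  by move=> z; rewrite /v' (hom_eqv hv) -!addrA [x.+1%:Z + _]addrC.
have hmix : forall be ga, r be = t ga -> u be = v' ga.
  by move=> be ga /hJ [al [<- <-]]; rewrite hv'.
have hconst : forall b1 b2, r b1 = r b2 -> u b1 = u b2.
  move=> b1 b2 h; have [->//|ne] := eqVneq b1 b2.
  have [ga hga] := hK0r _ _ h (elimN eqP ne).
  rewrite (hmix _ ga) ?hga // (hmix b2 ga) // hga h //.
have mono_r : forall b1 b2, r b1 <= r b2 -> u b1 <= u b2.
  move=> b1 b2 h; have [le|lt] := leP b1 b2; first exact: (proj1 hu _ _ le).
  have h2 := proj1 hr _ _ (ltW lt).
  have e : r b1 = r b2 by apply: le_anti; rewrite h h2.
  by rewrite (hconst _ _ e).
have mono_t : forall g1 g2, t g1 <= t g2 -> v' g1 <= v' g2.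
  move=> g1 g2 h; have [le|lt] := leP g1 g2; first exact: hv'm.
  have h2 := proj1 ht _ _ (ltW lt).
  have e : t g1 = t g2 by apply: le_anti; rewrite h h2.
  have ne : g1 <> g2 by move=> E; move: lt; rewrite E ltxx.
  have [be hbe] := hK0t _ _ e ne.
  by rewrite -(hmix be) // (hmix be g2) // hbe e.
pose bsel de := epsilon (inhabits 0) (fun be => r be = de).
pose gsel de := epsilon (inhabits 0) (fun ga => t ga = de).
pose w de := if excluded_middle_informative (exists be, r be = de)
             then u (bsel de) else v' (gsel de).
have W1 : forall be, w (r be) = u be.
  move=> be; rewrite /w; case: excluded_middle_informative => [h|[]]; last by exists be.
  by apply: hconst; exact: (epsilon_spec (inhabits 0) (fun b => r b = r be) h).
have W2 : forall ga, w (t ga) = v' ga.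
  move=> ga; rewrite /w; case: excluded_middle_informative => h.
    by apply: hmix; exact: (epsilon_spec (inhabits 0) (fun b => r b = t ga) h).
  have hs : t (gsel (t ga)) = t ga.
    by apply: (epsilon_spec (inhabits 0) (fun g => t g = t ga)); exists ga.
  case: (eqVneq (gsel (t ga)) ga) => [-> //|ne].
  by case: h; have := hK0t _ _ hs (elimN eqP ne); rewrite hs.
exists w; split.
- split.
    move=> d1 d2.
    case: (hK1 d1) => [[b1 <-]|[g1 <-]]; case: (hK1 d2) => [[b2 <-]|[g2 <-]] => h12.
    + by rewrite !W1; apply: mono_r.
    + move: h12; rewrite le_eqVlt => /orP [/eqP ->//|lt].
      have [al [h1 h2]] := hK2r _ _ lt.
      rewrite W1 W2; apply: (le_trans (mono_r _ _ h1)).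
      by rewrite -hv'; apply: mono_t; rewrite -hc.
    + move: h12; rewrite le_eqVlt => /orP [/eqP ->//|lt].
      have [al [h1 h2]] := hK2t _ _ lt.
      rewrite W1 W2; apply: (le_trans (mono_t g1 (q al) _)); first by rewrite -hc.
      by rewrite hv'; apply: mono_r.
    + by rewrite !W2; apply: mono_t.
  move=> de; case: (hK1 de) => [[be <-]|[ga <-]].
    by rewrite -(hom_eqv hr) !W1 (hom_eqv hu).
  by rewrite -(hom_eqv ht) !W2 hv'e.
- by exists 0 => z /=; rewrite mul0r addr0 W1.
- by exists k => z /=; rewrite W2 /v' mulNr addrNK.
- move=> w' hw' [k1 h1] [k2 h2].
  have hk2 : k2 = k1 + k.
    have := hk 0; rewrite /= h1 h2 /= hc -addrA.
    by move=> /addrI; rewrite -mulrDl => /mulD_inj.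
  exists (- k1) => de.
  have -> : w de = w' de + k1 * x.+1%:Z.
    case: (hK1 de) => [[be <-]|[ga <-]].
      by rewrite W1 h1.
    rewrite W2 /v' h2 hk2 /= -addrA; congr (_ + _).
    by rewrite mulrDl mulNr addrK.
  by rewrite mulNr addrK.
Qed.
Lemma lex_lt (M : nat) (k k' : int) (r r' : 'I_M.+1) :
  (k * M.+1%:Z + (r : nat)%:Z < k' * M.+1%:Z + (r' : nat)%:Z) =
  (k < k') || ((k == k') && (r < r')%N).
Proof.
have := ltn_ord r; have := ltn_ord r'.
move: (r : nat) (r' : nat) => x y hy hx.
apply/idP/idP.
  move=> h; nia.
move=> /orP [h|/andP [/eqP -> h]]; nia.
Qed.

Lemma dl_pb (a b c d : nat) (fp : 'I_a.+1 -> 'I_b.+1) (fq : 'I_a.+1 -> 'I_c.+1)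
  (fr : 'I_b.+1 -> 'I_d.+1) (ft : 'I_c.+1 -> 'I_d.+1) :
  delta_hom fp -> delta_hom fq -> delta_hom fr -> delta_hom ft ->
  (forall al, fr (fp al) = ft (fq al)) ->
  (forall be ga, fr be = ft ga -> exists al, fp al = be /\ fq al = ga) ->
  (forall al al', fp al = fp al' -> fq al = fq al' -> al = al') ->
  lam_pullback a b c d (delta_to_lam fp) (delta_to_lam fq) (delta_to_lam fr) (delta_to_lam ft).
Proof.
move=> hp hq hr ht hc hJ hU.
apply: pb_gen; try exact: dl_hom.
- move=> z; rewrite -!dl_comp; exact: dl_ext.
- move=> be ga.
  rewrite (decomp b be) (decomp c ga).
  move: (kq b be) (rq b be) (kq c ga) (rq c ga) => k1 b0 k2 c0.
  rewrite !dl_form => /lex_eq [<- e].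
  have [al0 [h1 h2]] := hJ _ _ e.
  by exists (k1 * a.+1%:Z + (al0 : nat)%:Z); rewrite !dl_form h1 h2.
- move=> al al'.
  rewrite (decomp a al) (decomp a al').
  move: (kq a al) (rq a al) (kq a al') (rq a al') => k a0 k' a0'.
  rewrite !dl_form => /lex_eq [<- e1] /lex_eq [_ e2].
  by rewrite (hU _ _ e1 e2).
Qed.

Lemma dl_po (a b c d : nat) (fp : 'I_a.+1 -> 'I_b.+1) (fq : 'I_a.+1 -> 'I_c.+1)
  (fr : 'I_b.+1 -> 'I_d.+1) (ft : 'I_c.+1 -> 'I_d.+1) :
  delta_hom fp -> delta_hom fq -> delta_hom fr -> delta_hom ft ->
  (forall al, fr (fp al) = ft (fq al)) ->
  (forall be ga, fr be = ft ga -> exists al, fp al = be /\ fq al = ga) ->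
  (forall de, (exists be, fr be = de) \/ (exists ga, ft ga = de)) ->
  (forall b1 b2, fr b1 = fr b2 -> b1 <> b2 -> exists ga, ft ga = fr b1) ->
  (forall g1 g2, ft g1 = ft g2 -> g1 <> g2 -> exists be, fr be = ft g1) ->
  (forall be ga, (fr be < ft ga)%N ->
     exists al, (fr be <= fr (fp al))%N /\ (fr (fp al) <= ft ga)%N) ->
  (forall be ga, exists al, (fr be <= fr (fp al))%N \/ (fr (fp al) <= ft ga)%N) ->
  (forall be ga, (ft ga < fr be)%N ->
     exists al, (ft ga <= fr (fp al))%N /\ (fr (fp al) <= fr be)%N) ->
  (forall be ga, exists al, (ft ga <= fr (fp al))%N \/ (fr (fp al) <= fr be)%N) ->
  lam_pushout a b c d (delta_to_lam fp) (delta_to_lam fq) (delta_to_lam fr) (delta_to_lam ft).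
Proof.
move=> hp hq hr ht hc hJ hK1 hK0r hK0t hKra hKrb hKta hKtb.
have hrp : forall k (al0 : 'I_a.+1), delta_to_lam fr (delta_to_lam fp (k * a.+1%:Z + (al0 : nat)%:Z))
    = k * d.+1%:Z + (fr (fp al0) : nat)%:Z by move=> k al0; rewrite !dl_form.
apply: po_gen; try exact: dl_hom.
- move=> z; rewrite -!dl_comp; exact: dl_ext.
- move=> be ga.
  rewrite (decomp b be) (decomp c ga).
  move: (kq b be) (rq b be) (kq c ga) (rq c ga) => k1 b0 k2 c0.
  rewrite !dl_form => /lex_eq [<- e].
  have [al0 [h1 h2]] := hJ _ _ e.
  by exists (k1 * a.+1%:Z + (al0 : nat)%:Z); rewrite !dl_form h1 h2.
- move=> de; rewrite (decomp d de); move: (kq d de) (rq d de) => k d0.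
  case: (hK1 d0) => [[b0 <-]|[c0 <-]].
    by left; exists (k * b.+1%:Z + (b0 : nat)%:Z); rewrite dl_form.
  by right; exists (k * c.+1%:Z + (c0 : nat)%:Z); rewrite dl_form.
- move=> b1 b2; rewrite (decomp b b1) (decomp b b2).
  move: (kq b b1) (rq b b1) (kq b b2) (rq b b2) => k1 x1 k2 x2.
  rewrite !dl_form => /lex_eq [<- e] ne.
  have ne' : x1 <> x2 by move=> E; apply: ne; rewrite E.
  have [g hg] := hK0r _ _ e ne'.
  by exists (k1 * c.+1%:Z + (g : nat)%:Z); rewrite !dl_form hg.
- move=> g1 g2; rewrite (decomp c g1) (decomp c g2).
  move: (kq c g1) (rq c g1) (kq c g2) (rq c g2) => k1 x1 k2 x2.
  rewrite !dl_form => /lex_eq [<- e] ne.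
  have ne' : x1 <> x2 by move=> E; apply: ne; rewrite E.
  have [g hg] := hK0t _ _ e ne'.
  by exists (k1 * b.+1%:Z + (g : nat)%:Z); rewrite !dl_form hg.
- move=> be ga; rewrite (decomp b be) (decomp c ga).
  move: (kq b be) (rq b be) (kq c ga) (rq c ga) => k1 b0 k2 c0.
  rewrite !dl_form lex_lt => /orP [lt|/andP [/eqP <- lt]].
    have [al0 [h|h]] := hKrb b0 c0.
      exists (k1 * a.+1%:Z + (al0 : nat)%:Z); rewrite hrp !lex_le eqxx h lt andbT orbT; split=> //.
    exists (k2 * a.+1%:Z + (al0 : nat)%:Z); rewrite hrp !lex_le eqxx h lt andbT orbT; split=> //.
  have [al0 [h1 h2]] := hKra _ _ lt.
  by exists (k1 * a.+1%:Z + (al0 : nat)%:Z); rewrite hrp !lex_le eqxx h1 h2 !orbT.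
- move=> be ga; rewrite (decomp b be) (decomp c ga).
  move: (kq b be) (rq b be) (kq c ga) (rq c ga) => k1 b0 k2 c0.
  rewrite !dl_form lex_lt => /orP [lt|/andP [/eqP <- lt]].
    have [al0 [h|h]] := hKtb b0 c0.
      exists (k2 * a.+1%:Z + (al0 : nat)%:Z); rewrite hrp !lex_le eqxx h lt andbT orbT; split=> //.
    exists (k1 * a.+1%:Z + (al0 : nat)%:Z); rewrite hrp !lex_le eqxx h lt andbT orbT; split=> //.
  have [al0 [h1 h2]] := hKta _ _ lt.
  by exists (k2 * a.+1%:Z + (al0 : nat)%:Z); rewrite hrp !lex_le eqxx h1 h2 !orbT.
Qed.
Lemma hom_comp (a b c : nat) (g h : int -> int) :
  lam_hom a b g -> lam_hom b c h -> lam_hom a c (fun z => h (g z)).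
Proof.
move=> hg hh; split.
  by move=> x y hxy; apply: (proj1 hh); apply: (proj1 hg).
by move=> x; rewrite (hom_eqv hg) (hom_eqv hh).
Qed.

Lemma dl_small (a b : nat) (phi : 'I_a.+1 -> 'I_b.+1) (j : 'I_a.+1) :
  delta_to_lam phi (j : nat)%:Z = (phi j : nat)%:Z.
Proof. by have := dl_form phi 0 j; rewrite !mul0r !add0r. Qed.

Lemma pb_exist (a b c d : nat) (p q r t : int -> int) :
  lam_hom a b p -> lam_hom a c q -> lam_hom b d r -> lam_hom c d t ->
  (forall z, r (p z) = t (q z)) -> lam_pullback a b c d p q r t ->
  forall be ga, r be = t ga -> exists al, p al = be /\ q al = ga.
Proof.
move=> hp hq hr ht hc [_ PB] be ga e.
pose u z := be + z * b.+1%:Z.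
pose v z := ga + z * c.+1%:Z.
have hu : lam_hom 0 b u.
  split; first by move=> x y hxy; rewrite /u lerD2l ler_pM2r.
  by move=> x; rewrite /u mulrDl mul1r addrA.
have hv : lam_hom 0 c v.
  split; first by move=> x y hxy; rewrite /v lerD2l ler_pM2r.
  by move=> x; rewrite /v mulrDl mul1r addrA.
have hcc : lam_eq d (r \o u) (t \o v).
  by exists 0 => z; rewrite /= /u /v (hom_shift hr) (hom_shift ht) e mul0r addr0.
have [w [hw [k1 h1] [k2 h2] _]] := PB 0%N u v hu hv hcc.
have hk : k1 = k2.
  have := congr1 r (h1 0); have := congr1 t (h2 0).
  rewrite /u /v /= !mul0r !addr0 (hom_shift hr) (hom_shift ht) hc e => ->.
  by move=> /addrI /mulD_inj.
exists (w 0 + k1 * a.+1%:Z).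
rewrite (hom_shift hp) (hom_shift hq).
by have := h1 0; have := h2 0; rewrite /u /v /= !mul0r !addr0 -hk => <- <-.
Qed.
Lemma hom_addc (a b : nat) (g : int -> int) (K : int) :
  lam_hom a b g -> lam_hom a b (fun z => g z + K).
Proof.
move=> hg; split.
  by move=> x y hxy; rewrite lerD2r; apply: (proj1 hg).
by move=> x; rewrite (hom_eqv hg) -!addrA [b.+1%:Z + _]addrC.
Qed.

Lemma sq_norm (a b c d : nat) (p q r t r0 t0 : int -> int) :
  lam_hom a b p -> lam_hom a c q -> lam_hom b d r0 -> lam_hom c d t0 ->
  lam_eq d r0 r -> lam_eq d t0 t ->
  lam_pullback a b c d p q r t -> lam_pushout a b c d p q r t ->
  exists q', [/\ lam_hom a c q', (forall z, r0 (p z) = t0 (q' z)),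
     lam_pullback a b c d p q' r0 t0 & lam_pushout a b c d p q' r0 t0].
Proof.
move=> hp hq hr0 ht0 [k1 h1] [k2 h2] [[j hj] PB] [_ PO].
pose e := k1 + j - k2.
pose q' z := q z + (- e) * c.+1%:Z.
have hq' : lam_hom a c q' by apply: hom_addc.
have hc' : forall z, r0 (p z) = t0 (q' z).
  move=> z; rewrite /q' (hom_shift ht0).
  have E1 := h1 (p z); have E2 := h2 (q z); have E3 := hj z; simpl in E3.
  rewrite /e; lia.
exists q'; split => //.
- split; first by exists 0 => z /=; rewrite mul0r addr0 hc'.
  move=> x u v hu hv [k hk].
  have hk' : lam_eq d (r \o u) (t \o v).
    exists (k + k2 - k1) => z /=.
    have E1 := h1 (u z); have E2 := h2 (v z); have E3 := hk z; simpl in E3; lia.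
  have [w [hw E1 [k' h'] U]] := PB x u v hu hv hk'.
  exists w; split => //.
    exists (e + k') => z /=; have := h' z; rewrite /= /q' => ->; lia.
  move=> w' hw' E1' [k'' h'']; apply: U => //.
  exists (k'' - e) => z /=; have := h'' z; rewrite /= /q' => ->; lia.
- split; first by exists 0 => z /=; rewrite mul0r addr0 hc'.
  move=> x u v hu hv [k hk].
  have hk' : lam_eq x (u \o p) (v \o q).
    exists (k + e) => z /=.
    have -> : q z = q' z + e * c.+1%:Z by rewrite /q' mulNr addrNK.
    rewrite (hom_shift hv); have := hk z; rewrite /= => ->; lia.
  have [w [hw [a1 g1] [a2 g2] U]] := PO x u v hu hv hk'.
  exists w; split => //.
  + exists (k1 + a1) => z /=; rewrite g1 /= h1 (hom_shift hw); lia.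
  + exists (k2 + a2) => z /=; rewrite g2 /= h2 (hom_shift hw); lia.
  + move=> w' hw' [b1 f1] [b2 f2]; apply: U => //.
      exists (b1 - k1) => z /=; rewrite f1 /= h1 (hom_shift hw'); lia.
    exists (b2 - k2) => z /=; rewrite f2 /= h2 (hom_shift hw'); lia.
Qed.
Lemma nec_multi (a b c d : nat) (p q : int -> int)
  (fr : 'I_b.+1 -> 'I_d.+1) (ft : 'I_c.+1 -> 'I_d.+1) :
  lam_hom a b p -> lam_hom a c q -> delta_hom fr -> delta_hom ft ->
  (forall z, delta_to_lam fr (p z) = delta_to_lam ft (q z)) ->
  lam_pullback a b c d p q (delta_to_lam fr) (delta_to_lam ft) ->
  forall j1 j2 l1 l2, fr j1 = fr j2 -> ft l1 = ft l2 -> fr j1 = ft l1 ->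
  j1 <> j2 -> l1 <> l2 -> False.
Proof.
move=> hp hq hr ht hc PB.
have ex := pb_exist hp hq (dl_hom hr) (dl_hom ht) hc PB.
have key : forall (j1 j2 : 'I_b.+1) (l1 l2 : 'I_c.+1), (j1 < j2)%N -> (l1 < l2)%N -> fr j1 = fr j2 -> ft l1 = ft l2 ->
    fr j1 = ft l1 -> False.
  move=> j1 j2 l1 l2 lj ll e1 e2 e3.
  have q1 : delta_to_lam fr (j1 : nat)%:Z = delta_to_lam ft (l2 : nat)%:Z.
    by rewrite !dl_small e3 e2.
  have q2 : delta_to_lam fr (j2 : nat)%:Z = delta_to_lam ft (l1 : nat)%:Z.
    by rewrite !dl_small -e3 e1.
  have [al [h1 h2]] := ex _ _ q1.
  have [al' [h1' h2']] := ex _ _ q2.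
  case: (leP al al') => h.
    have := proj1 hq _ _ h; rewrite h2 h2' lez_nat leqNgt ll //.
  have := proj1 hp _ _ (ltW h); rewrite h1 h1' lez_nat leqNgt lj //.
move=> j1 j2 l1 l2 e1 e2 e3 n1 n2.
case: (ltngtP j1 j2) => [lj||/val_inj //]; case: (ltngtP l1 l2) => [ll|ll|/val_inj //].
- exact: key lj ll e1 e2 e3.
- by apply: (key j1 j2 l2 l1) => //; rewrite -e2.
- move=> lj; apply: (key j2 j1 l1 l2) => //; by rewrite -e1.
- move=> lj; apply: (key j2 j1 l2 l1) => //; by rewrite -e1 -e2.
Qed.

Definition eps1 (d : nat) (i : 'I_d.+1) (z : 'I_d.+1) : 'I_d.+2 :=
  inord (if (z <= i)%N then (z : nat) else z.+1).
Definition eps2 (d : nat) (i : 'I_d.+1) (z : 'I_d.+1) : 'I_d.+2 :=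
  inord (if (z < i)%N then (z : nat) else z.+1).

Lemma eps1E (d : nat) (i z : 'I_d.+1) : (eps1 i z : nat) = if (z <= i)%N then (z : nat) else z.+1.
Proof. rewrite /eps1 inordK //; have := ltn_ord z; case: ifP => _; lia. Qed.

Lemma eps2E (d : nat) (i z : 'I_d.+1) : (eps2 i z : nat) = if (z < i)%N then (z : nat) else z.+1.
Proof. rewrite /eps2 inordK //; have := ltn_ord z; case: ifP => _; lia. Qed.

Lemma eps1_hom (d : nat) (i : 'I_d.+1) : delta_hom (eps1 i).
Proof.
move=> x y h; rewrite !eps1E.
move: (x : nat) (y : nat) (i : nat) h => x' y' i' h.
case: (leqP x' i'); case: (leqP y' i') => h1 h2; lia.
Qed.

Lemma eps2_hom (d : nat) (i : 'I_d.+1) : delta_hom (eps2 i).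
Proof.
move=> x y h; rewrite !eps2E.
move: (x : nat) (y : nat) (i : nat) h => x' y' i' h.
case: (ltnP x' i'); case: (ltnP y' i') => h1 h2; lia.
Qed.

Lemma nec_empty (a b c d : nat) (p q : int -> int)
  (fr : 'I_b.+1 -> 'I_d.+1) (ft : 'I_c.+1 -> 'I_d.+1) :
  lam_hom a b p -> lam_hom a c q -> delta_hom fr -> delta_hom ft ->
  (forall z, delta_to_lam fr (p z) = delta_to_lam ft (q z)) ->
  lam_pushout a b c d p q (delta_to_lam fr) (delta_to_lam ft) ->
  forall i : 'I_d.+1, (forall j, fr j != i) -> (forall l, ft l != i) -> False.
Proof.
move=> hp hq hr ht hc [_ PO] i nr nt.
pose u := delta_to_lam (eps1 i \o fr).
pose v := delta_to_lam (eps1 i \o ft).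
have hu : lam_hom b d.+1 u by apply: dl_hom => x y h; apply: eps1_hom; apply: hr.
have hv : lam_hom c d.+1 v by apply: dl_hom => x y h; apply: eps1_hom; apply: ht.
have hcc : lam_eq d.+1 (u \o p) (v \o q).
  by exists 0 => z; rewrite /= /u /v (dl_comp fr (eps1 i)) (dl_comp ft (eps1 i)) hc mul0r addr0.
have [w [hw _ _ U]] := PO d.+1 u v hu hv hcc.
have e12r : forall j, eps1 i (fr j) = eps2 i (fr j).
  move=> j; apply: val_inj; rewrite /= eps1E eps2E.
  by have := nr j; rewrite leq_eqVlt -(inj_eq val_inj) => /negbTE ->.
have e12t : forall j, eps1 i (ft j) = eps2 i (ft j).
  move=> j; apply: val_inj; rewrite /= eps1E eps2E.
  by have := nt j; rewrite leq_eqVlt -(inj_eq val_inj) => /negbTE ->.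
have L1 : lam_eq d.+1 (delta_to_lam (eps1 i) \o delta_to_lam fr) u.
  by exists 0 => z; rewrite /= /u (dl_comp fr (eps1 i)) mul0r addr0.
have L2 : lam_eq d.+1 (delta_to_lam (eps1 i) \o delta_to_lam ft) v.
  by exists 0 => z; rewrite /= /v (dl_comp ft (eps1 i)) mul0r addr0.
have L3 : lam_eq d.+1 (delta_to_lam (eps2 i) \o delta_to_lam fr) u.
  by exists 0 => z; rewrite /= /u (dl_ext e12r) (dl_comp fr (eps2 i)) mul0r addr0.
have L4 : lam_eq d.+1 (delta_to_lam (eps2 i) \o delta_to_lam ft) v.
  by exists 0 => z; rewrite /= /v (dl_ext e12t) (dl_comp ft (eps2 i)) mul0r addr0.
have [k1 E1] := U _ (dl_hom (@eps1_hom d i)) L1 L2.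
have [k2 E2] := U _ (dl_hom (@eps2_hom d i)) L3 L4.
have := E1 (i : nat)%:Z; have := E2 (i : nat)%:Z.
rewrite !dl_small eps1E eps2E leqnn ltnn => h2 h1.
have : (i.+1 : nat)%:Z - (i : nat)%:Z = (k2 - k1) * d.+2%:Z by rewrite h1 h2 mulrBl; lia.
have -> : (i.+1 : nat)%:Z - (i : nat)%:Z = 1 by lia.
move: (k2 - k1) => K hK.
case: (lerP K 0) => hK0; nia.
Qed.
Definition chi (c d : nat) (ft : 'I_c.+1 -> 'I_d.+1) (i : 'I_d.+1) (l1 : 'I_c.+1)
  (l : 'I_c.+1) : 'I_d.+2 :=
  inord ((if (ft l <= i)%N then (ft l : nat) else (ft l).+1) + ((ft l == i) && (l1 < l))%N).

Lemma chiE (c d : nat) (ft : 'I_c.+1 -> 'I_d.+1) (i : 'I_d.+1) (l1 l : 'I_c.+1) :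
  (chi ft i l1 l : nat) =
  ((if (ft l <= i)%N then (ft l : nat) else (ft l).+1) + ((ft l == i) && (l1 < l))%N)%N.
Proof.
rewrite /chi inordK //.
have := ltn_ord (ft l); have := ltn_ord i.
case: (eqVneq (ft l) i) => [->|ne] /=; first by rewrite leqnn; lia.
rewrite addn0; case: ifP => _; lia.
Qed.

Lemma chi_hom (c d : nat) (ft : 'I_c.+1 -> 'I_d.+1) (i : 'I_d.+1) (l1 : 'I_c.+1) :
  delta_hom ft -> delta_hom (chi ft i l1).
Proof.
move=> ht x y h; rewrite !chiE.
have hf := ht _ _ h.
case: (eqVneq (ft x) i) => [ex|nx]; case: (eqVneq (ft y) i) => [ey|ny] /=.
- rewrite ex ey leqnn /=; case: (ltnP l1 x) => h1 /=.
    by rewrite (leq_trans h1 h).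
  by rewrite addn0 leq_addr.
- rewrite ex leqnn addn0; move: hf; rewrite ex => hf.
  have : (i < ft y)%N by rewrite ltn_neqAle eq_sym ny hf.
  move=> lt; rewrite (leqNgt (ft y) i) lt /=; case: (l1 < x)%N; lia.
- rewrite ey leqnn addn0; move: hf; rewrite ey => hf.
  have : (ft x < i)%N by rewrite ltn_neqAle nx hf.
  move=> lt; rewrite (ltnW lt); case: (l1 < y)%N; lia.
- rewrite !addn0.
  have nx' : (ft x : nat) != (i : nat) by [].
  have ny' : (ft y : nat) != (i : nat) by [].
  move: hf nx' ny'; move: (ft x : nat) (ft y : nat) (i : nat) => fx fy ii hf nx' ny'.
  case: ifP; case: ifP => h1 h2; lia.
Qed.

Lemma nec_em (a b c d : nat) (p q : int -> int)
  (fr : 'I_b.+1 -> 'I_d.+1) (ft : 'I_c.+1 -> 'I_d.+1) :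
  lam_hom a b p -> lam_hom a c q -> delta_hom fr -> delta_hom ft ->
  (forall z, delta_to_lam fr (p z) = delta_to_lam ft (q z)) ->
  lam_pushout a b c d p q (delta_to_lam fr) (delta_to_lam ft) ->
  forall (i : 'I_d.+1) (l1 l2 : 'I_c.+1), (forall j, fr j != i) -> ft l1 = i -> ft l2 = i ->
  (l1 < l2)%N -> False.
Proof.
move=> hp hq hr ht hc [_ PO] i l1 l2 nr e1 e2 l12.
pose u := delta_to_lam (eps1 i \o fr).
pose v := delta_to_lam (chi ft i l1).
have hu : lam_hom b d.+1 u by apply: dl_hom => x y h; apply: eps1_hom; apply: hr.
have hv : lam_hom c d.+1 v by apply: dl_hom; apply: chi_hom.
have hcc : lam_eq d.+1 (u \o p) (v \o q).
  exists 0 => z; rewrite /= mul0r addr0.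
  have := hc z; rewrite /u /v (decomp b (p z)) (decomp c (q z)).
  move: (kq b (p z)) (rq b (p z)) (kq c (q z)) (rq c (q z)) => k j k' l.
  rewrite !dl_form => /lex_eq [<- e]; congr (_ + _); congr Posz.
  rewrite /= chiE eps1E e; have := nr j; rewrite e => /negbTE -> /=.
  by rewrite addn0.
have [w [hw _ [k2 h2] _]] := PO d.+1 u v hu hv hcc.
have E1 := h2 (l1 : nat)%:Z; have E2 := h2 (l2 : nat)%:Z.
rewrite /= /v !dl_small e1 in E1; rewrite /= /v !dl_small e2 in E2.
have : (chi ft i l1 l1 : nat) = chi ft i l1 l2 by apply/eqP; rewrite -eqz_nat E1 E2.
rewrite !chiE e1 e2 eqxx leqnn ltnn l12 /=.
lia.
Qed.

Definition sig1 (d : nat) (z : 'I_d.+1) : 'I_d.+1 := if (z == 1 :> nat) then ord0 else z.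
Definition tau1 (d : nat) (z : 'I_d.+1) : 'I_d.+1 := if (z == 0 :> nat) then inord 1 else z.

Lemma sig1_hom (d : nat) : delta_hom (@sig1 d).
Proof.
move=> x y h; rewrite /sig1.
case: (eqVneq (x : nat) 1) => hx; case: (eqVneq (y : nat) 1) => hy //=; lia.
Qed.

Lemma tau1_hom (d : nat) : (0 < d)%N -> delta_hom (@tau1 d).
Proof.
move=> hd x y h; rewrite /tau1.
case: (eqVneq (x : nat) 0) => hx; case: (eqVneq (y : nat) 0) => hy //=;
  rewrite ?inordK //; lia.
Qed.
Lemma id_hom (d : nat) : lam_hom d d (fun z => z).
Proof. by split. Qed.

Lemma nec_adj (a b c d : nat) (p q : int -> int)
  (fr : 'I_b.+1 -> 'I_d.+1) (ft : 'I_c.+1 -> 'I_d.+1) :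
  lam_hom a b p -> lam_hom a c q -> delta_hom fr -> delta_hom ft ->
  (forall z, delta_to_lam fr (p z) = delta_to_lam ft (q z)) ->
  lam_pushout a b c d p q (delta_to_lam fr) (delta_to_lam ft) ->
  forall y : 'I_d.+1,
  (forall j, (fr j : nat) != y) ->
  (exists j, (fr j : nat) = (if (y == d :> nat) then 0 else y.+1)%N) ->
  (exists l, (ft l : nat) = y) ->
  (forall l, (ft l : nat) != (if (y == d :> nat) then 0 else y.+1)%N) -> False.
Proof.
move=> hp hq hr ht hc [_ PO] y nr [j0 hj0] [l0 hl0] nt.
have hd : (0 < d)%N.
  rewrite lt0n; apply/negP => /eqP d0.
  have yd : (y : nat) = d by have := ltn_ord y; lia.
  have := nr j0; rewrite hj0 yd eqxx; lia.
pose rho z := z + - (y : nat)%:Z.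
have hrho : lam_hom d d rho by apply: hom_addc; apply: id_hom.
pose u z := delta_to_lam (@sig1 d) (rho (delta_to_lam fr z)).
pose v z := delta_to_lam (@tau1 d) (rho (delta_to_lam ft z)).
have hu : lam_hom b d u.
  exact: (hom_comp (hom_comp (dl_hom hr) hrho) (dl_hom (@sig1_hom d))).
have hv : lam_hom c d v.
  exact: (hom_comp (hom_comp (dl_hom ht) hrho) (dl_hom (tau1_hom hd))).
have agree : forall K (e : 'I_d.+1), (e : nat) != 0%N -> (e : nat) != 1%N ->
    delta_to_lam (@sig1 d) (K * d.+1%:Z + (e : nat)%:Z) =
    delta_to_lam (@tau1 d) (K * d.+1%:Z + (e : nat)%:Z).
  by move=> K e h0 h1; rewrite !dl_form /sig1 /tau1 (negbTE h0) (negbTE h1).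
have hcc : forall z, u (p z) = v (q z).
  move=> z; rewrite /u /v hc.
  have hz := decomp d (rho (delta_to_lam ft (q z))).
  rewrite hz; move: (kq d _) (rq d _) hz => K e hz.
  apply: agree; apply/eqP => e0.
  - have hz' := hz; rewrite /rho -hc (decomp b (p z)) dl_form in hz'.
    move: (kq b (p z)) (rq b (p z)) hz' => k j hz'.
    have : k * d.+1%:Z + (fr j : nat)%:Z = K * d.+1%:Z + (y : nat)%:Z.
      by move: hz'; rewrite e0; lia.
    by move/lex_eq => [_ E]; move: (nr j); rewrite E eqxx.
  - have hz' := hz; rewrite /rho (decomp c (q z)) dl_form in hz'.
    move: (kq c (q z)) (rq c (q z)) hz' => k l hz'.
    have := nt l.
    case: (eqVneq (y : nat) d) => yd /=.
      have : k * d.+1%:Z + (ft l : nat)%:Z = (K + 1) * d.+1%:Z + ((ord0 : 'I_d.+1) : nat)%:Z.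
        by move: hz'; rewrite e0 /=; lia.
      by move/lex_eq => [_ ->].
    have yd' : (y.+1 < d.+1)%N by have := ltn_ord y; lia.
    have : k * d.+1%:Z + (ft l : nat)%:Z = K * d.+1%:Z + ((inord y.+1 : 'I_d.+1) : nat)%:Z.
      by move: hz'; rewrite e0 inordK //; lia.
    by move/lex_eq => [_ ->]; rewrite inordK // eqxx.
have hcc' : lam_eq d (u \o p) (v \o q) by exists 0 => z; rewrite /= hcc mul0r addr0.
have [w [hw [k1 h1] [k2 h2] _]] := PO d u v hu hv hcc'.
have hk : k1 = k2.
  have := h1 (p 0); have := h2 (q 0); rewrite /= hcc hc => ->.
  by move/addrI/mulD_inj.
pose be0 := if (y == d :> nat) then (1 * b.+1%:Z + (j0 : nat)%:Z) else (j0 : nat)%:Z.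
have hb0 : delta_to_lam fr be0 = (y : nat)%:Z + 1.
  rewrite /be0; case: (eqVneq (y : nat) d) hj0 => yd hj0.
    by rewrite dl_form hj0 yd; lia.
  by rewrite dl_small hj0 /=; lia.
have hu0 : u be0 = 0.
  rewrite /u hb0 /rho.
  have -> : (y : nat)%:Z + 1 + - (y : nat)%:Z = ((inord 1 : 'I_d.+1) : nat)%:Z.
    by rewrite inordK; lia.
  by rewrite dl_small /sig1 inordK.
have hv0 : v (l0 : nat)%:Z = 1.
  rewrite /v dl_small hl0 /rho addrN.
  have := dl_small (@tau1 d) ord0; rewrite /= => ->.
  by rewrite /tau1 /= inordK.
have m := proj1 hw ((y : nat)%:Z) ((y : nat)%:Z + 1) (lerDl _ _).
have E1 := h1 be0; have E2 := h2 (l0 : nat)%:Z.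
rewrite /= hb0 hu0 in E1; rewrite /= dl_small hl0 hv0 in E2.
move: m; rewrite hk in E1; lia.
Qed.
Lemma pair_sq (S : finType) (n : nat) (m : S -> nat)
    (f : forall s : S, 'I_(m s).+1 -> 'I_n.+1)
    (hf : forall s : S, delta_hom (f s)) (ob : {set S} -> nat)
    (mor : {set S} -> {set S} -> int -> int) :
  lam_cube ob mor -> extends_claw f ob mor ->
  strongly_cartesian ob mor -> strongly_cocartesian ob mor ->
  forall s s', s != s' -> exists a p q,
    [/\ lam_hom a (m s) p, lam_hom a (m s') q,
      (forall z, delta_to_lam (f s) (p z) = delta_to_lam (f s') (q z)),
      lam_pullback a (m s) (m s') n p q (delta_to_lam (f s)) (delta_to_lam (f s')) &
      lam_pushout a (m s) (m s') n p q (delta_to_lam (f s)) (delta_to_lam (f s'))].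
Proof.
move=> [H1 _ _] [E0 E1] SC SCC s s' ne.
have PB := SC set0 s s' ne (negbT (in_set0 s)) (negbT (in_set0 s')).
have PO := SCC set0 s s' ne (negbT (in_set0 s)) (negbT (in_set0 s')).
rewrite !setU0 in PB PO.
have [Es Rs] := E1 s; have [Es' Rs'] := E1 s'.
rewrite Es Es' E0 in PB PO.
have hp := H1 [set s] (s |: [set s']) (subsetUl _ _).
have hq := H1 [set s'] (s |: [set s']) (subsetUr _ _).
rewrite Es in hp; rewrite Es' in hq.
have [q' [hq' hc PB' PO']] := sq_norm hp hq (dl_hom (hf s)) (dl_hom (hf s')) Rs Rs' PB PO.
by exists (ob (s |: [set s'])), (mor [set s] (s |: [set s'])), q'.
Qed.

Lemma fib_cases (k n : nat) (g : 'I_k.+1 -> 'I_n.+1) (i : 'I_n.+1) :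
  #|[set j | g j == i]| != 1%N ->
  (forall j, g j != i) \/ (exists j1 j2, [/\ g j1 = i, g j2 = i & (j1 < j2)%N]).
Proof.
move=> hc.
case: (pickP (fun j => g j == i)) => [j hj|none]; last first.
  by left => j; rewrite none.
right.
case: (boolP [exists j', (g j' == i) && (j' != j)]) => [/existsP [j' /andP [hj' ne]]|/existsPn hall].
  2: { exfalso; move: hc; apply/negP; rewrite negbK; apply/cards1P; exists j.
       apply/setP => x; rewrite !inE.
       apply/idP/idP => [hx|/eqP ->//]; by have := hall x; rewrite hx /= negbK. }
case: (ltngtP j j') => [lt|lt|/val_inj E]; last by rewrite E eqxx in ne.
  by exists j, j'; rewrite (eqP hj) (eqP hj').
by exists j', j; rewrite (eqP hj) (eqP hj').
Qed.

Lemma not_img (k n : nat) (g : 'I_k.+1 -> 'I_n.+1) (y : 'I_n.+1) :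
  ~~ in_image g y -> forall j, g j != y.
Proof.
move=> h j; apply: contra h => /eqP E; apply/existsP; exists j; by rewrite E.
Qed.

Lemma not_imgn (k n : nat) (g : 'I_k.+1 -> 'I_n.+1) (y : nat) :
  ~~ in_image g y -> forall j, (g j : nat) != y.
Proof.
move=> h j; apply: contra h => /eqP E; apply/existsP; exists j; by rewrite E.
Qed.

Lemma is_img (k n : nat) (g : 'I_k.+1 -> 'I_n.+1) (y : nat) :
  in_image g y -> exists j, (g j : nat) = y.
Proof. by move=> /existsP [j /eqP E]; exists j. Qed.

Lemma forward (S : finType) (n : nat) (m : S -> nat)
    (f : forall s : S, 'I_(m s).+1 -> 'I_n.+1)
    (hf : forall s : S, delta_hom (f s)) (ob : {set S} -> nat)
    (mor : {set S} -> {set S} -> int -> int) :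
  lam_cube ob mor -> extends_claw f ob mor ->
  strongly_cartesian ob mor -> strongly_cocartesian ob mor ->
  cyclically_compatible f.
Proof.
move=> H E SC SCC.
have SQ := pair_sq hf H E SC SCC.
have pairL : forall s s' (y : 'I_n.+1), s != s' ->
    let y2 := (if (y == n :> nat) then 0 else y.+1)%N in
    ~~ (in_image (f s) y && in_image (f s) y2) ->
    ~~ (in_image (f s') y && in_image (f s') y2) -> False.
  move=> s s' y ne y2 h1 h2.
  have y2lt : (y2 < n.+1)%N.
    by rewrite /y2; case: eqP => //; have := ltn_ord y; lia.
  pose Y2 : 'I_n.+1 := Ordinal y2lt.
  have [a [p [q [hp hq hc PB PO]]]] := SQ s s' ne.
  have [a' [p' [q' [hp' hq' hc' PB' PO']]]] := SQ s' s (negbT (introF eqP (fun E => elimN eqP ne (esym E)))).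
  case/nandP: h1 => h1; case/nandP: h2 => h2.
  - exact: (nec_empty hp hq (hf s) (hf s') hc PO (not_img h1) (not_img h2)).
  - case: (boolP (in_image (f s) y2)) => i1.
      case: (boolP (in_image (f s') y)) => i2.
        have [j hj] := is_img i1; have [l hl] := is_img i2.
        apply: (nec_adj hp hq (hf s) (hf s') hc PO (not_imgn h1)); first by exists j.
          by exists l.
        exact: not_imgn h2.
      exact: (nec_empty hp hq (hf s) (hf s') hc PO (not_img h1) (not_img i2)).
    exact: (nec_empty hp hq (hf s) (hf s') hc PO (not_img (y := Y2) i1) (not_img (y := Y2) h2)).
  - case: (boolP (in_image (f s') y2)) => i1.
      case: (boolP (in_image (f s) y)) => i2.
        have [j hj] := is_img i1; have [l hl] := is_img i2.
        apply: (nec_adj hp' hq' (hf s') (hf s) hc' PO' (not_imgn h2)); first by exists j.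
          by exists l.
        exact: not_imgn h1.
      exact: (nec_empty hp hq (hf s) (hf s') hc PO (not_img i2) (not_img h2)).
    exact: (nec_empty hp hq (hf s) (hf s') hc PO (not_img (y := Y2) h1) (not_img (y := Y2) i1)).
  - exact: (nec_empty hp hq (hf s) (hf s') hc PO (not_img (y := Y2) h1) (not_img (y := Y2) h2)).
split; first split.
- move=> i s s' h1 h2; apply/eqP; apply/negPn/negP => ne; exfalso.
  have [a [p [q [hp hq hc PB PO]]]] := SQ s s' ne.
  have [a' [p' [q' [hp' hq' hc' PB' PO']]]] := SQ s' s (negbT (introF eqP (fun E => elimN eqP ne (esym E)))).
  case: (fib_cases h1) => [e1|[j1 [j2 [f1 f2 lj]]]];
    case: (fib_cases h2) => [e2|[l1 [l2 [g1 g2 ll]]]].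
  + exact: (nec_empty hp hq (hf s) (hf s') hc PO e1 e2).
  + exact: (nec_em hp hq (hf s) (hf s') hc PO e1 g1 g2 ll).
  + exact: (nec_em hp' hq' (hf s') (hf s) hc' PO' e2 f1 f2 lj).
  + apply: (nec_multi hp hq (hf s) (hf s') hc PB (j1 := j1) (j2 := j2) (l1 := l1) (l2 := l2)).
    * by rewrite f1 f2.
    * by rewrite g1 g2.
    * by rewrite f1 g1.
    * by move=> EE; move: lj; rewrite EE ltnn.
    * by move=> EE; move: ll; rewrite EE ltnn.
- move=> i /andP [i0 iN] s s' h1 h2; apply/eqP; apply/negPn/negP => ne; exfalso.
  have yl : (i.-1 < n.+1)%N by lia.
  apply: (pairL s s' (Ordinal yl) ne) => /=.
    have -> : (i.-1 == n) = false by apply/negbTE; lia.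
    by have -> : i.-1.+1 = i by lia.
  have -> : (i.-1 == n) = false by apply/negbTE; lia.
  by have -> : i.-1.+1 = i by lia.
- move=> s s' h1 h2; apply/eqP; apply/negPn/negP => ne; exfalso.
  apply: (pairL s s' ord_max ne) => /=; rewrite eqxx andbC //.
Qed.
Lemma ar1 (a d : nat) : d != 0%N -> (a < a + d)%N.
Proof. move=> h; lia. Qed.
Lemma ar2 (a b d : nat) : (a <= b)%N -> (d <= b - a)%N -> (a + d != b) -> (a + d < b)%N.
Proof. move=> *; lia. Qed.
Lemma ar3 (a b d N : nat) : (b < N)%N -> (a <= b)%N -> (d <= b - a)%N -> (a + d < N)%N.
Proof. move=> *; lia. Qed.
Lemma ar4 (a b : nat) : (a <= b)%N -> (a + (b - a) = b)%N.
Proof. move=> *; lia. Qed.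
Lemma ar5 (a b N : nat) : (a < N)%N -> (a + (b + N - a) = b + N)%N.
Proof. move=> *; lia. Qed.
Lemma ar6 (a d N : nat) : ~~ (a + d < N)%N -> (a + d = (a + d - N) + N)%N.
Proof. move=> *; lia. Qed.
Lemma ar7 (a b d N : nat) : (a < N)%N -> (d <= b + N - a)%N -> (a + d - N <= b)%N.
Proof. move=> *; lia. Qed.
Lemma ar8 (a b : nat) : (a <= b)%N -> a != b -> (a < b)%N.
Proof. move=> *; lia. Qed.
Section Idx.
Variables (X : finType) (le : rel X) (A : {set X}).
Hypothesis le_refl : forall x, le x x.
Hypothesis le_anti : forall x y, x \in A -> y \in A -> le x y -> le y x -> x = y.
Hypothesis le_trans : forall x y z, le x y -> le y z -> le x z.
Hypothesis le_total : forall x y, x \in A -> y \in A -> le x y || le y x.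

Definition idx (x : X) : nat := #|[set y in A | le y x && (y != x)]|.

Lemma idx_lt x : x \in A -> (idx x < #|A|)%N.
Proof.
move=> hx; apply: proper_card; apply/properP; split.
  by apply/subsetP => y; rewrite inE => /andP [].
by exists x => //; rewrite inE eqxx !andbF.
Qed.

Lemma idx_strict x y : x \in A -> y \in A -> le x y -> x != y -> (idx x < idx y)%N.
Proof.
move=> hx hy lxy nxy; apply: proper_card; apply/properP; split.
  apply/subsetP => z; rewrite !inE => /andP [hz /andP [lzx nzx]].
  rewrite hz (le_trans lzx lxy) /=; apply/eqP => E; move: lzx; rewrite E => lyx.
  by move: nxy; rewrite (le_anti hx hy lxy lyx) eqxx.
by exists x; rewrite !inE ?hx ?lxy ?nxy ?eqxx ?andbF.
Qed.

Lemma idx_le x y : x \in A -> y \in A -> le x y -> (idx x <= idx y)%N.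
Proof.
move=> hx hy lxy; case: (eqVneq x y) => [->//|ne].
by apply: ltnW; apply: idx_strict.
Qed.

Lemma idx_leE x y : x \in A -> y \in A -> (idx x <= idx y)%N = le x y.
Proof.
move=> hx hy; apply/idP/idP; last exact: idx_le.
move=> h; case/orP: (le_total hx hy) => // lyx.
case: (eqVneq y x) => [->//|ne].
by move: (idx_strict hy hx lyx ne); rewrite ltnNge h.
Qed.

Lemma idx_inj x y : x \in A -> y \in A -> idx x = idx y -> x = y.
Proof.
move=> hx hy e; apply: le_anti => //; rewrite -idx_leE // e //.
Qed.

Lemma idx_surj (K : nat) : #|A| = K.+1 -> forall r : 'I_K.+1, exists2 x, x \in A & idx x = r.
Proof.
move=> hA r.
pose g (x : X) : 'I_K.+1 := inord (idx x).
have gv : forall x, x \in A -> (g x : nat) = idx x.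
  by move=> x hx; rewrite /g inordK // -hA idx_lt.
have ginj : {in A &, injective g}.
  move=> x y hx hy e; apply: idx_inj => //; by rewrite -!gv // e.
have : [set g x | x in A] = [set: 'I_K.+1].
  apply/eqP; rewrite eqEcard subsetT /= cardsT card_ord.
  by rewrite card_in_imset // hA.
move=> E; have : r \in [set g x | x in A] by rewrite E inE.
case/imsetP => x hx ->; exists x => //; by rewrite gv.
Qed.

End Idx.
Section Cube.
Variables (S : finType) (n : nat) (m : S -> nat).
Variable f : forall s : S, 'I_(m s).+1 -> 'I_n.+1.
Arguments f : clear implicits.
Hypothesis hf : forall s : S, delta_hom (f s).
Hypothesis hcc : cyclically_compatible f.

Definition pt := ('I_n.+1 * {dffun forall s : S, 'I_(m s).+1})%type.
Definition zpt : pt := (ord0, [ffun s : S => (ord0 : 'I_(m s).+1)]).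
Definition Qs (T : {set S}) : {set pt} :=
  [set P : pt | [forall s, if s \in T then f s (P.2 s) == P.1 else P.2 s == ord0]].
Definition ple (P Q : pt) : bool := (P.1 <= Q.1)%N && [forall s, (P.2 s <= Q.2 s)%N].
Definition proj (T : {set S}) (P : pt) : pt := (P.1, [ffun s => if s \in T then P.2 s else ord0]).
Definition mix (U : {set S}) (P Q : pt) : pt := (P.1, [ffun s => if s \in U then P.2 s else Q.2 s]).
Definition pre (s : S) (y : 'I_n.+1) : 'I_(m s).+1 := odflt ord0 [pick j | f s j == y].
Definition prept (y : 'I_n.+1) : pt := (y, [ffun s => pre s y]).

Lemma pre_spec (s : S) (y : 'I_n.+1) : in_image (f s) y -> f s (pre s y) = y.
Proof.
rewrite /pre; case: pickP => [j /eqP //|none] /existsP [j hj].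
by move: (none j); rewrite -(inj_eq val_inj) hj.
Qed.

Lemma QsP (T : {set S}) (P : pt) : reflect (forall s, if s \in T then f s (P.2 s) = P.1 else P.2 s = ord0) (P \in Qs T).
Proof.
rewrite inE; apply: (iffP forallP) => h s; have := h s; by case: (s \in T) => /eqP.
Qed.

Lemma Qs_in (T : {set S}) (P : pt) (s : S) : P \in Qs T -> s \in T -> f s (P.2 s) = P.1.
Proof. by move=> /QsP /(_ s); case: (s \in T). Qed.

Lemma Qs_out (T : {set S}) (P : pt) (s : S) : P \in Qs T -> s \notin T -> P.2 s = ord0.
Proof. by move=> /QsP /(_ s); case: (s \in T). Qed.

Lemma proj_in (T : {set S}) (P : pt) : (forall s, s \in T -> f s (P.2 s) = P.1) -> proj T P \in Qs T.
Proof.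
move=> h; apply/QsP => s /=; rewrite ffunE; case: (boolP (s \in T)) => // hs; exact: h.
Qed.

Lemma projK (T : {set S}) (P : pt) : P \in Qs T -> proj T P = P.
Proof.
move=> hP; case: P hP => y F hP; rewrite /proj /=; congr pair; apply/ffunP => s.
rewrite ffunE; case: (boolP (s \in T)) => // hs; by rewrite (Qs_out hP).
Qed.

Lemma proj_proj (T T' : {set S}) (P : pt) : T \subset T' -> proj T (proj T' P) = proj T P.
Proof.
move=> sub; rewrite /proj /=; congr pair; apply/ffunP => s; rewrite !ffunE.
by case: ifP => // hs; rewrite (subsetP sub _ hs).
Qed.

Lemma proj_sub (T T' : {set S}) (P : pt) : T \subset T' -> P \in Qs T' -> proj T P \in Qs T.
Proof.
move=> sub hP; apply: proj_in => s hs; exact: (Qs_in hP (subsetP sub _ hs)).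
Qed.

Lemma ple_refl (P : pt) : ple P P.
Proof. by rewrite /ple leqnn; apply/forallP => s. Qed.

Lemma ple_trans (P Q R : pt) : ple P Q -> ple Q R -> ple P R.
Proof.
move=> /andP [h1 /forallP h2] /andP [h3 /forallP h4].
rewrite /ple (leq_trans h1 h3); apply/forallP => s; exact: leq_trans (h2 s) (h4 s).
Qed.

Lemma ple_anti (P Q : pt) : ple P Q -> ple Q P -> P = Q.
Proof.
case: P Q => y F [y' F'] /andP [h1 /forallP h2] /andP [h3 /forallP h4] /=.
congr pair; first by apply: val_inj; apply/eqP; rewrite eqn_leq h1 h3.
apply/ffunP => s; apply: val_inj; apply/eqP; rewrite eqn_leq h2 h4 //.
Qed.

Lemma ple_lvl (P Q : pt) : ple P Q -> (P.1 <= Q.1)%N.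
Proof. by case/andP. Qed.

Lemma proj_mono (T : {set S}) (P Q : pt) : ple P Q -> ple (proj T P) (proj T Q).
Proof.
move=> /andP [h1 /forallP h2]; rewrite /ple h1 /=; apply/forallP => s.
by rewrite !ffunE; case: ifP.
Qed.

Lemma lvl_ple (T : {set S}) (P Q : pt) : P \in Qs T -> Q \in Qs T -> (P.1 < Q.1)%N -> ple P Q.
Proof.
move=> hP hQ lt; rewrite /ple (ltnW lt); apply/forallP => s.
case: (boolP (s \in T)) => hs; last by rewrite (Qs_out hP hs) (Qs_out hQ hs).
rewrite leqNgt; apply/negP => h.
have := hf (ltnW h); rewrite (Qs_in hP hs) (Qs_in hQ hs) leqNgt lt //.
Qed.

Definition ufib (s : S) (y : 'I_n.+1) := exists j0, forall j, (f s j == y) = (j == j0).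

Lemma bc1 (s s' : S) (y : 'I_n.+1) : s != s' -> ufib s y \/ ufib s' y.
Proof.
move=> ne; case: hcc => [[B1 _] _].
have key : forall s, #|[set j | f s j == y]| == 1%N -> ufib s y.
  move=> u /cards1P [j0 E]; exists j0 => j.
  by move/setP: E => /(_ j); rewrite !inE.
case: (eqVneq #|[set j | f s j == y]| 1%N) => [h|h]; first by left; apply: key; rewrite h.
case: (eqVneq #|[set j | f s' j == y]| 1%N) => [h'|h']; first by right; apply: key; rewrite h'.
by move: ne; rewrite (B1 y s s' h h') eqxx.
Qed.

Lemma ufib_eq (s : S) (y : 'I_n.+1) (j j' : 'I_(m s).+1) : ufib s y -> f s j = y -> f s j' = y -> j = j'.
Proof.
move=> [j0 h] e e'; have := h j; have := h j'; rewrite e e' eqxx.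
by move=> /esym /eqP -> /esym /eqP ->.
Qed.

Lemma ufib_ex (s : S) (y : 'I_n.+1) : ufib s y -> exists j, f s j = y.
Proof. by move=> [j0 h]; exists j0; apply/eqP; rewrite h. Qed.

Lemma chain (T : {set S}) (P Q : pt) : P \in Qs T -> Q \in Qs T -> ple P Q || ple Q P.
Proof.
move=> hP hQ.
case: (ltngtP P.1 Q.1) => [lt|lt|eqy].
- by rewrite (lvl_ple hP hQ lt).
- by rewrite (lvl_ple hQ hP lt) orbT.
apply/negPn/negP; rewrite negb_or /ple eqy leqnn /= => /andP [/forallPn [s hs] /forallPn [s' hs']].
rewrite -ltnNge in hs; rewrite -ltnNge in hs'.
have inT : forall u (R R' : pt), R \in Qs T -> R' \in Qs T -> (R.2 u < R'.2 u)%N -> u \in T.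
  move=> u R R' hR hR' lt; apply/negPn/negP => hu.
  by move: lt; rewrite (Qs_out hR hu) (Qs_out hR' hu) ltnn.
have sT := inT _ _ _ hQ hP hs; have s'T := inT _ _ _ hP hQ hs'.
have yQ : Q.1 = P.1 by apply: val_inj; rewrite /= eqy.
have ne : s != s'.
  apply/eqP => E; move: hs hs'; rewrite E => h1 h2.
  by move: (ltn_trans h1 h2); rewrite ltnn.
case: (bc1 P.1 ne) => u.
- have E := ufib_eq u (Qs_in hP sT) (etrans (Qs_in hQ sT) yQ).
  by move: hs; rewrite E ltnn.
- have E := ufib_eq u (Qs_in hP s'T) (etrans (Qs_in hQ s'T) yQ).
  by move: hs'; rewrite E ltnn.
Qed.
Definition hitm (s : S) (z : nat) := in_image (f s) (z %% n.+1).

Lemma modS_case (z : nat) : (z.+1 %% n.+1 = if z %% n.+1 == n then 0 else (z %% n.+1).+1)%N.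
Proof.
rewrite -addn1 -modnDml; have := ltn_mod z n.+1.
case: eqP => [->|ne] h; first by rewrite addn1 modnn.
rewrite modn_small; lia.
Qed.

Lemma blame (s s' : S) (z : nat) : s != s' ->
  (hitm s z && hitm s z.+1) || (hitm s' z && hitm s' z.+1).
Proof.
move=> ne; case: hcc => [[_ B2] C]; rewrite /hitm modS_case.
apply/negPn/negP; rewrite negb_or => /andP [h1 h2].
case: eqP h1 h2 => [e|ne'] h1 h2.
  rewrite e andbC in h1; rewrite e andbC in h2.
  by move: ne; rewrite (C s s' h1 h2) eqxx.
have hi : (0 < (z %% n.+1).+1 <= n)%N.
  by have := ltn_mod z n.+1; move/eqP: ne'; lia.
by move: ne; rewrite (B2 _ hi s s' h1 h2) eqxx.
Qed.

Lemma walk (s' : S) (U : {set S}) (y d : nat) : s' \notin U ->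
  (forall u, u \in U -> hitm u y) ->
  (forall j, (j < d)%N -> ~~ hitm s' (y + j)) ->
  forall u, u \in U -> hitm u (y + d).
Proof.
move=> ns hU; elim: d => [|d IH] hmiss u hu; first by rewrite addn0; apply: hU.
have IH' := IH (fun j hj => hmiss j (ltnW hj)) u hu.
have ne : u != s' by apply/eqP => E; move: ns; rewrite -E hu.
case/orP: (blame (y + d) ne) => /andP [h h']; first by rewrite addnS.
by move: (hmiss d (ltnSn d)); rewrite h.
Qed.

Lemma first_hit (s' : S) (y e : nat) : hitm s' (y + e) ->
  exists d, [/\ (d <= e)%N, hitm s' (y + d) & forall j, (j < d)%N -> ~~ hitm s' (y + j)].
Proof.
move=> h.
have ex : exists d, hitm s' (y + d) by exists e.
case: (ex_minnP ex) => d hd hmin.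
exists d; split => //; first exact: hmin.
move=> j lt; apply/negP => hj; by move: (hmin j hj); rewrite leqNgt lt.
Qed.

Lemma hitm_ord (s : S) (y : 'I_n.+1) : hitm s y = in_image (f s) y.
Proof. by rewrite /hitm modn_small. Qed.

Lemma common (T : {set S}) : exists y : 'I_n.+1, forall s, s \in T -> in_image (f s) y.
Proof.
suff H : forall k (T : {set S}), #|T| = k -> exists y : 'I_n.+1, forall s, s \in T -> in_image (f s) y.
  exact: (H _ T erefl).
elim => [|k IH] {}T hT.
  by exists ord0 => s; move/eqP: hT; rewrite cards_eq0 => /eqP ->; rewrite inE.
have : (0 < #|T|)%N by rewrite hT.
case/card_gt0P => s hs.
have hT0 : #|T :\ s| = k by move: hT; rewrite (cardsD1 s T) hs add1n => [[]].
have [y0 hy0] := IH _ hT0.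
case: (boolP (in_image (f s) y0)) => hsy.
  exists y0 => u hu; case: (eqVneq u s) => [->//|ne]; apply: hy0; by rewrite !inE ne.
pose v := f s ord0.
have hv : hitm s (y0 + (v + n.+1 - y0)).
  have -> : (y0 + (v + n.+1 - y0) = v + n.+1)%N by have := ltn_ord y0; lia.
  rewrite /hitm modnDr modn_small //; apply/existsP; by exists ord0.
have [d [_ hd hmiss]] := first_hit hv.
have hw := walk (U := T :\ s) (y := y0) (s' := s) (d := d).
have ns : s \notin T :\ s by rewrite !inE eqxx.
have hU : forall u, u \in T :\ s -> hitm u y0 by move=> u hu; rewrite hitm_ord; apply: hy0.
have lt : ((y0 + d) %% n.+1 < n.+1)%N by apply: ltn_mod.
exists (Ordinal lt) => u hu.
case: (eqVneq u s) => [->//|ne].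
have := hw ns hU hmiss u; rewrite !inE ne hu /= => /(_ isT) //.
Qed.

Lemma Qs_ne (T : {set S}) : exists P, P \in Qs T.
Proof.
have [y hy] := common T.
exists (proj T (prept y)); apply: proj_in => s hs /=; rewrite ffunE; exact: pre_spec (hy s hs).
Qed.

Definition NQ (T : {set S}) := (#|Qs T|).-1.

Lemma NQ_S (T : {set S}) : (NQ T).+1 = #|Qs T|.
Proof.
have [P hP] := Qs_ne T; rewrite /NQ prednK //; apply/card_gt0P; by exists P.
Qed.
Definition idxT (T : {set S}) (P : pt) : nat := idx ple (Qs T) P.
Definition enmT (T : {set S}) (r : nat) : pt := odflt zpt [pick P in Qs T | idxT T P == r].
Definition phiT (T T' : {set S}) (r : 'I_(NQ T').+1) : 'I_(NQ T).+1 :=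
  inord (idxT T (proj T (enmT T' r))).
Arguments phiT : clear implicits.

Lemma ple_anti' (T : {set S}) (P Q : pt) : P \in Qs T -> Q \in Qs T -> ple P Q -> ple Q P -> P = Q.
Proof. by move=> _ _; apply: ple_anti. Qed.

Lemma idxT_lt (T : {set S}) (P : pt) : P \in Qs T -> (idxT T P < (NQ T).+1)%N.
Proof. by move=> hP; rewrite NQ_S; apply: idx_lt. Qed.

Lemma idxT_leE (T : {set S}) (P Q : pt) : P \in Qs T -> Q \in Qs T ->
  (idxT T P <= idxT T Q)%N = ple P Q.
Proof.
apply: idx_leE; [exact: ple_refl|exact: ple_anti'|exact: ple_trans|exact: chain].
Qed.

Lemma idxT_inj (T : {set S}) (P Q : pt) : P \in Qs T -> Q \in Qs T -> idxT T P = idxT T Q -> P = Q.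
Proof.
apply: idx_inj; [exact: ple_refl|exact: ple_anti'|exact: ple_trans|exact: chain].
Qed.

Lemma enm_spec (T : {set S}) (r : 'I_(NQ T).+1) : enmT T r \in Qs T /\ idxT T (enmT T r) = r.
Proof.
have [P hP e] := idx_surj ple_refl (@ple_anti' T) ple_trans (@chain T) (esym (NQ_S T)) r.
rewrite /enmT; case: pickP => [Q /andP [hQ /eqP eQ]|none] //=.
by move: (none P); rewrite /idxT hP e eqxx.
Qed.

Lemma enm_idx (T : {set S}) (P : pt) : P \in Qs T -> enmT T (idxT T P) = P.
Proof.
move=> hP; have lt := idxT_lt hP.
have [h1 h2] := enm_spec (Ordinal lt).
exact: (idxT_inj h1 hP h2).
Qed.

Lemma phi_val (T T' : {set S}) (r : 'I_(NQ T').+1) : T \subset T' ->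
  (phiT T T' r : nat) = idxT T (proj T (enmT T' r)).
Proof.
move=> sub; rewrite /phiT inordK //; apply: idxT_lt; apply: proj_sub sub _.
by case: (enm_spec r).
Qed.

Lemma phi_idx (T T' : {set S}) (P : pt) : T \subset T' -> P \in Qs T' ->
  (phiT T T' (inord (idxT T' P)) : nat) = idxT T (proj T P).
Proof.
move=> sub hP; rewrite phi_val // inordK ?idxT_lt // enm_idx //.
Qed.

Lemma phi_hom (T T' : {set S}) : T \subset T' -> delta_hom (phiT T T').
Proof.
move=> sub x y hxy; rewrite !phi_val //.
have [hx ex] := enm_spec x; have [hy ey] := enm_spec y.
rewrite (idxT_leE (proj_sub sub hx) (proj_sub sub hy)); apply: proj_mono.
by rewrite -(idxT_leE hx hy) ex ey.
Qed.

Lemma phi_id (T : {set S}) (r : 'I_(NQ T).+1) : phiT T T r = r.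
Proof.
apply: val_inj; rewrite /= phi_val // projK; last by case: (enm_spec r).
by case: (enm_spec r).
Qed.

Lemma phi_comp (T T' T'' : {set S}) (r : 'I_(NQ T'').+1) :
  T \subset T' -> T' \subset T'' -> phiT T T' (phiT T' T'' r) = phiT T T'' r.
Proof.
move=> s1 s2; apply: val_inj; rewrite /=.
have [hr er] := enm_spec r.
have hP : proj T' (enmT T'' r) \in Qs T' by exact: (proj_sub s2 hr).
rewrite (phi_val _ s1) (phi_val _ (subset_trans s1 s2)).
have -> : phiT T' T'' r = inord (idxT T' (proj T' (enmT T'' r))) by [].
rewrite inordK ?idxT_lt // enm_idx // proj_proj //.
Qed.

Definition obC (T : {set S}) : nat := NQ T.
Definition morC (T T' : {set S}) : int -> int := delta_to_lam (phiT T T').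

Lemma cube_ok : lam_cube obC morC.
Proof.
split.
- by move=> T T' sub; apply: dl_hom; apply: phi_hom.
- by move=> T; exists 0 => x; rewrite /morC mul0r addr0 (dl_ext (@phi_id T)) dl_id.
- move=> T T' T'' s1 s2; exists 0 => x; rewrite /morC mul0r addr0 /=.
  rewrite -dl_comp; apply: dl_ext => r /=; by rewrite phi_comp.
Qed.
Lemma card_lt_ord (k : nat) (i : nat) : (i <= k.+1)%N -> #|[set j : 'I_k.+1 | (j < i)%N]| = i.
Proof.
move=> le.
have -> : [set j : 'I_k.+1 | (j < i)%N] = [set widen_ord le j | j : 'I_i].
  apply/setP => j; rewrite inE; apply/idP/imsetP => [lt|[j' _ ->]] /=; last exact: ltn_ord.
  by exists (Ordinal lt) => //; apply: val_inj.
rewrite card_imset ?card_ord //.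
by move=> x y /(congr1 val) /= /val_inj.
Qed.

Lemma embed_idx (T : {set S}) (k : nat) (g : 'I_k.+1 -> pt) :
  (forall i, g i \in Qs T) -> (forall P, P \in Qs T -> exists i, g i = P) ->
  (forall i j, ple (g i) (g j) = (i <= j)%N) ->
  #|Qs T| = k.+1 /\ forall i, idxT T (g i) = i.
Proof.
move=> hin hsur hle.
have ginj : injective g.
  move=> i j e; apply: val_inj; apply/eqP; rewrite eqn_leq -!hle e !ple_refl //.
have E : Qs T = [set g i | i : 'I_k.+1].
  apply/setP => P; apply/idP/imsetP => [hP|[i _ ->]] //.
  by have [i hi] := hsur P hP; exists i.
split; first by rewrite E card_imset ?card_ord.
move=> i; rewrite /idxT /idx.
have -> : [set y in Qs T | ple y (g i) && (y != g i)] = [set g j | j in [set j : 'I_k.+1 | (j < i)%N]].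
  apply/setP => P; rewrite inE; apply/andP/imsetP.
    move=> [hP /andP [l ne]]; have [j hj] := hsur P hP; exists j => //.
    rewrite inE ltn_neqAle -hle hj l andbT; apply: contra ne => /eqP e.
    by rewrite -hj (val_inj e).
  move=> [j]; rewrite inE => lt ->; split; first exact: hin.
  rewrite hle (ltnW lt) /=; apply: contraTneq lt => /ginj ->; by rewrite ltnn.
by rewrite card_imset // card_lt_ord // ltnW.
Qed.

Definition g0 (y : 'I_n.+1) : pt := (y, [ffun s : S => (ord0 : 'I_(m s).+1)]).

Lemma g0_in (i : 'I_n.+1) : g0 i \in Qs set0.
Proof. by apply/QsP => s; rewrite inE /= ffunE. Qed.

Lemma g0_props : #|Qs set0| = n.+1 /\ forall i, idxT set0 (g0 i) = i.
Proof.
apply: embed_idx.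
- exact: g0_in.
- move=> P hP; exists P.1; case: P hP => y F hP /=; congr pair; apply/ffunP => s.
  by rewrite ffunE (Qs_out hP) ?inE.
- move=> i j; rewrite /ple /=.
  have -> : [forall s, ([ffun s0 => (ord0 : 'I_(m s0).+1)] s <= [ffun s0 => (ord0 : 'I_(m s0).+1)] s)%N] = true.
    by apply/forallP => s; rewrite !ffunE.
  by rewrite andbT.
Qed.

Definition g1 (s : S) (j : 'I_(m s).+1) : pt :=
  (f s j, [ffun u : S => if u == s then (inord j : 'I_(m u).+1) else ord0]).

Lemma g1_s (s : S) (j : 'I_(m s).+1) : (g1 j).2 s = j.
Proof. by rewrite ffunE eqxx inord_val. Qed.

Lemma g1_in (s : S) (i : 'I_(m s).+1) : g1 i \in Qs [set s].
Proof.
apply/QsP => u; rewrite inE.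
case: (eqVneq u s) => [->|ne]; first by rewrite g1_s.
by rewrite ffunE (negbTE ne).
Qed.

Lemma g1_props (s : S) : #|Qs [set s]| = (m s).+1 /\ forall i : 'I_(m s).+1, idxT [set s] (g1 i) = i.
Proof.
apply: embed_idx.
- exact: g1_in.
- move=> P hP; exists (P.2 s); case: P hP => y F hP /=.
  rewrite /g1 (Qs_in hP (set11 s)) /=; congr pair; apply/ffunP => u; rewrite ffunE.
  case: (eqVneq u s) => [->|ne]; first by rewrite inord_val.
  by rewrite (Qs_out hP) // inE.
- move=> i j; apply/idP/idP.
    by move=> /andP [_ /forallP /(_ s)]; rewrite !g1_s.
  move=> lij; rewrite /ple (hf lij) /=; apply/forallP => u; rewrite !ffunE.
  case: (eqVneq u s) => [->|ne] //; by rewrite !inordK // ltn_ord.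
Qed.

Lemma NQ0 : NQ set0 = n.
Proof. by rewrite /NQ (proj1 g0_props). Qed.

Lemma NQ1 (s : S) : NQ [set s] = m s.
Proof. by rewrite /NQ (proj1 (g1_props s)). Qed.

Lemma phi01 (s : S) (r : 'I_(NQ [set s]).+1) :
  (phiT set0 [set s] r : nat) = f s (inord r).
Proof.
rewrite phi_val ?sub0set //.
have hr : (r < (m s).+1)%N by rewrite -NQ1 ltn_ord.
have -> : enmT [set s] r = g1 (inord r : 'I_(m s).+1).
  have := enm_idx (g1_in (inord r : 'I_(m s).+1)).
  by rewrite (proj2 (g1_props s)) inordK.
have -> : proj set0 (g1 (inord r : 'I_(m s).+1)) = g0 (f s (inord r)).
  rewrite /proj /g0 /g1 /=; congr pair; apply/ffunP => u; by rewrite !ffunE inE.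
by rewrite (proj2 g0_props).
Qed.

Lemma ext_ok : extends_claw f obC morC.
Proof.
split; first exact: NQ0.
move=> s; split; first exact: NQ1.
exists 0 => x; rewrite mul0r addr0 /morC !dl_def phi01.
have rv : forall K, (rq K x : nat) = absz (x %% K.+1%:Z)%Z.
  by move=> K; apply/eqP; rewrite -eqz_nat rq_val gez0_abs // modz_ge0.
rewrite rv /kq NQ0 NQ1.
by [].
Qed.
Lemma mixE1 (U : {set S}) (P Q : pt) u : u \in U -> (mix U P Q).2 u = P.2 u.
Proof. by move=> h; rewrite ffunE h. Qed.
Lemma mixE2 (U : {set S}) (P Q : pt) u : u \notin U -> (mix U P Q).2 u = Q.2 u.
Proof. by move=> h; rewrite ffunE (negbTE h). Qed.

Lemma proj_mix (T U : {set S}) (P Q : pt) : T \subset U -> proj T (mix U P Q) = proj T P.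
Proof.
move=> sub; rewrite /proj /mix /=; congr pair; apply/ffunP => u; rewrite !ffunE.
by case: (boolP (u \in T)) => // h; rewrite (subsetP sub _ h).
Qed.

Lemma img_Qs (U : {set S}) (P : pt) u : P \in Qs U -> u \in U -> in_image (f u) P.1.
Proof. by move=> hP hu; apply/existsP; exists (P.2 u); rewrite (Qs_in hP hu). Qed.

Lemma prept_ok (U : {set S}) (y : 'I_n.+1) : (forall u, u \in U -> in_image (f u) y) ->
  proj U (prept y) \in Qs U.
Proof. by move=> h; apply: proj_in => u hu; rewrite ffunE; apply: pre_spec; apply: h. Qed.

Lemma extp_ok (U V : {set S}) (P : pt) : U \subset V -> P \in Qs U ->
  (forall u, u \in V -> u \notin U -> in_image (f u) P.1) ->
  proj V (mix U P (prept P.1)) \in Qs V /\ proj U (proj V (mix U P (prept P.1))) = P.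
Proof.
move=> sub hP h; split.
  apply: proj_in => u hu; case: (boolP (u \in U)) => hU.
    by rewrite mixE1 // (Qs_in hP).
  by rewrite mixE2 // ffunE; apply: pre_spec; apply: h.
by rewrite proj_proj // proj_mix // projK.
Qed.

Section Square.
Variables (T : {set S}) (s s' : S) (A : {set S}).
Hypothesis ne : s != s'.
Hypothesis nsT : s \notin T.
Hypothesis ns'T : s' \notin T.
Hypothesis hA : A = s |: (s' |: T).

Lemma inA u : (u \in A) = [|| u == s, u == s' | u \in T].
Proof. by rewrite hA !inE. Qed.

Lemma sTB : T \subset s |: T. Proof. exact: subsetUr. Qed.
Lemma sTC : T \subset s' |: T. Proof. exact: subsetUr. Qed.
Lemma sBA : s |: T \subset A.
Proof. apply/subsetP => u; rewrite inA !inE => /orP [->|->] //; by rewrite !orbT. Qed.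
Lemma sCA : s' |: T \subset A.
Proof. apply/subsetP => u; rewrite inA !inE => /orP [->|->] //; by rewrite !orbT. Qed.
Lemma sTA : T \subset A. Proof. exact: subset_trans sTB sBA. Qed.

Lemma QJ (PB PC : pt) : PB \in Qs (s |: T) -> PC \in Qs (s' |: T) -> proj T PB = proj T PC ->
  exists2 PA, PA \in Qs A & proj (s |: T) PA = PB /\ proj (s' |: T) PA = PC.
Proof.
move=> hB hC e.
have ey : PC.1 = PB.1 by have := congr1 fst e.
have eT : forall u, u \in T -> PB.2 u = PC.2 u.
  move=> u hu; have := congr1 (fun X : pt => X.2 u) e; by rewrite /= !ffunE hu.
exists (mix (s |: T) PB PC).
  apply/QsP => u; rewrite inA /=.
  case: (eqVneq u s) => [->|nus] /=; first by rewrite mixE1 ?setU11 // (Qs_in hB) ?setU11.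
  case: (eqVneq u s') => [->|nus'] /=.
    by rewrite mixE2 ?(Qs_in hC) ?setU11 // !inE negb_or eq_sym ne.
  case: (boolP (u \in T)) => hu.
    by rewrite mixE1 ?(Qs_in hB) // inE hu orbT.
  by rewrite mixE2 ?(Qs_out hC) // !inE ?negb_or ?nus ?nus' hu.
split.
  rewrite /proj /=; case: PB hB e ey eT => y F hB e ey eT /=; congr pair.
  apply/ffunP => u; rewrite !ffunE; case: (boolP (u \in s |: T)) => hu //.
  by rewrite (Qs_out hB).
rewrite /proj /=; case: PC hC e ey eT => y F hC e ey eT /=; congr pair; first by [].
apply/ffunP => u; rewrite !ffunE.
case: (boolP (u \in s' |: T)) => hu; last by rewrite (Qs_out hC).
case: (boolP (u \in s |: T)) => hu' //.
have uT : u \in T.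
  move: hu hu'; rewrite !inE => /orP [/eqP ->|->] //.
  by rewrite (negbTE ns'T) orbF eq_sym (negbTE ne).
exact: eT.
Qed.

Lemma QU (PA PA' : pt) : PA \in Qs A -> PA' \in Qs A ->
  proj (s |: T) PA = proj (s |: T) PA' -> proj (s' |: T) PA = proj (s' |: T) PA' -> PA = PA'.
Proof.
move=> hP hP' e1 e2.
case: PA PA' hP hP' e1 e2 => [y F] [y' F'] hP hP' e1 e2.
have := congr1 fst e1; rewrite /= => ey; subst y'; congr pair.
apply/ffunP => u.
case: (boolP (u \in s |: T)) => h1.
  by have := congr1 (fun X : pt => X.2 u) e1; rewrite /= !ffunE h1.
case: (boolP (u \in s' |: T)) => h2.
  by have := congr1 (fun X : pt => X.2 u) e2; rewrite /= !ffunE h2.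
have hu : u \notin A.
  rewrite inA; move: h1 h2; rewrite !inE !negb_or => /andP [n1 n2] /andP [n3 _].
  by rewrite (negbTE n1) (negbTE n3) (negbTE n2).
by rewrite (Qs_out hP hu) (Qs_out hP' hu).
Qed.

Lemma inAnB u : u \in A -> u \notin s |: T -> u = s'.
Proof. by rewrite inA !inE negb_or => /or3P [->|/eqP ->|->] //; rewrite ?andbF. Qed.
Lemma inAnC u : u \in A -> u \notin s' |: T -> u = s.
Proof. by rewrite inA !inE negb_or => /or3P [/eqP ->|->|->] //; rewrite ?andbF. Qed.

Lemma candB_ok (PB : pt) : PB \in Qs (s |: T) -> in_image (f s') PB.1 ->
  proj A (mix (s |: T) PB (prept PB.1)) \in Qs A /\
  proj T (proj A (mix (s |: T) PB (prept PB.1))) = proj T PB.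
Proof.
move=> hB hi.
have [h1 h2] := extp_ok sBA hB (fun u hu hn => eq_ind_r (fun v => in_image (f v) _) hi (inAnB hu hn)).
split => //; have := congr1 (proj T) h2; by rewrite (proj_proj _ sTB).
Qed.

Lemma candC_ok (PC : pt) : PC \in Qs (s' |: T) -> in_image (f s) PC.1 ->
  proj A (mix (s' |: T) PC (prept PC.1)) \in Qs A /\
  proj T (proj A (mix (s' |: T) PC (prept PC.1))) = proj T PC.
Proof.
move=> hC hi.
have [h1 h2] := extp_ok sCA hC (fun u hu hn => eq_ind_r (fun v => in_image (f v) _) hi (inAnC hu hn)).
split => //; have := congr1 (proj T) h2; by rewrite (proj_proj _ sTC).
Qed.

Lemma candZ_ok (Z : 'I_n.+1) : (forall u, u \in A -> in_image (f u) Z) ->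
  proj A (prept Z) \in Qs A /\ proj T (proj A (prept Z)) \in Qs T /\ (proj T (proj A (prept Z))).1 = Z.
Proof.
move=> h; have hA' := prept_ok h; split => //; split => //.
exact: proj_sub sTA hA'.
Qed.

Lemma QK1 (PD : pt) : PD \in Qs T ->
  (exists2 PB, PB \in Qs (s |: T) & proj T PB = PD) \/
  (exists2 PC, PC \in Qs (s' |: T) & proj T PC = PD).
Proof.
move=> hD.
case: (bc1 PD.1 ne) => /ufib_ex [j hj]; [left|right].
- have hi : in_image (f s) PD.1 by apply/existsP; exists j; rewrite hj.
  have hh : forall u, u \in s |: T -> u \notin T -> in_image (f u) PD.1.
    by move=> u; rewrite !inE => /orP [/eqP ->//|->].
  have [h1 h2] := extp_ok sTB hD hh.
  by exists (proj (s |: T) (mix T PD (prept PD.1))).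
- have hi : in_image (f s') PD.1 by apply/existsP; exists j; rewrite hj.
  have hh : forall u, u \in s' |: T -> u \notin T -> in_image (f u) PD.1.
    by move=> u; rewrite !inE => /orP [/eqP ->//|->].
  have [h1 h2] := extp_ok sTC hD hh.
  by exists (proj (s' |: T) (mix T PD (prept PD.1))).
Qed.

Lemma QK0r (PB1 PB2 : pt) : PB1 \in Qs (s |: T) -> PB2 \in Qs (s |: T) ->
  proj T PB1 = proj T PB2 -> PB1 != PB2 ->
  exists2 PC, PC \in Qs (s' |: T) & proj T PC = proj T PB1.
Proof.
move=> h1 h2 e nePB.
have ey : PB2.1 = PB1.1 by have := congr1 fst e.
have eT : forall u, u \in T -> PB1.2 u = PB2.2 u.
  move=> u hu; have := congr1 (fun X : pt => X.2 u) e; by rewrite /= !ffunE hu.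
have nes : PB1.2 s != PB2.2 s.
  apply: contra nePB => /eqP es; apply/eqP.
  case: PB1 PB2 h1 h2 e ey eT es => [y F] [y' F'] h1 h2 e ey eT es /=.
  rewrite /= in ey; subst y'; congr pair; apply/ffunP => u.
  case: (eqVneq u s) => [->//|nus].
  case: (boolP (u \in T)) => hu; first exact: eT.
  have hu' : u \notin s |: T by rewrite !inE negb_or nus hu.
  by rewrite (Qs_out h1 hu') (Qs_out h2 hu').
have hD : proj T PB1 \in Qs T by exact: proj_sub sTB h1.
have hi : in_image (f s') (proj T PB1).1.
  case: (bc1 PB1.1 ne) => u.
    have := ufib_eq u (Qs_in h1 (setU11 s T)) (etrans (Qs_in h2 (setU11 s T)) ey).
    by move=> E; move: nes; rewrite E eqxx.
  by have [j hj] := ufib_ex u; apply/existsP; exists j; rewrite hj.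
have hh : forall u, u \in s' |: T -> u \notin T -> in_image (f u) (proj T PB1).1.
  by move=> u; rewrite !inE => /orP [/eqP ->//|->].
have [k1 k2] := extp_ok sTC hD hh.
by exists (proj (s' |: T) (mix T (proj T PB1) (prept (proj T PB1).1))).
Qed.

Lemma hitm_small (u : S) (z : nat) (lt : (z < n.+1)%N) : hitm u z = in_image (f u) z.
Proof. by rewrite /hitm modn_small. Qed.

Lemma QK2a (PB PC : pt) : PB \in Qs (s |: T) -> PC \in Qs (s' |: T) ->
  ple (proj T PB) (proj T PC) -> proj T PB != proj T PC ->
  exists2 PA, PA \in Qs A & ple (proj T PB) (proj T PA) && ple (proj T PA) (proj T PC).
Proof.
move=> hB hC hle hne.
have hDB : proj T PB \in Qs T by exact: proj_sub sTB hB.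
have hDC : proj T PC \in Qs T by exact: proj_sub sTC hC.
have y12 : (PB.1 <= PC.1)%N by exact: ple_lvl hle.
case: (boolP (in_image (f s') PB.1)) => hs'1.
  have [h1 h2] := candB_ok hB hs'1.
  by exists (proj A (mix (s |: T) PB (prept PB.1))) => //; rewrite h2 ple_refl hle.
have hv : hitm s' (PB.1 + (PC.1 - PB.1)).
  rewrite ar4 //.
  by rewrite hitm_ord; apply: (img_Qs hC); rewrite setU11.
have [d [hd1 hd hmiss]] := first_hit hv.
have ns' : s' \notin s |: T by rewrite !inE negb_or eq_sym ne.
have hU : forall u, u \in s |: T -> hitm u PB.1 by move=> u hu; rewrite hitm_ord; exact: img_Qs hB hu.
have hw := walk ns' hU hmiss.
have lt : (PB.1 + d < n.+1)%N by apply: ar3 (ltn_ord PC.1) y12 hd1.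
have d0 : d != 0%N by apply: contra hs'1 => /eqP d0; move: hd; rewrite d0 addn0 hitm_ord.
case: (eqVneq (PB.1 + d)%N PC.1) => hz.
  have hi : in_image (f s) PC.1.
    have : hitm s (PB.1 + d) by apply: hw; rewrite setU11.
    by rewrite (hitm_small _ lt) hz.
  have [h1 h2] := candC_ok hC hi.
  by exists (proj A (mix (s' |: T) PC (prept PC.1))) => //; rewrite h2 ple_refl hle.
pose Z : 'I_n.+1 := Ordinal lt.
have hZ : forall u, u \in A -> in_image (f u) Z.
  move=> u hu; rewrite /Z /= -hitm_small //.
  case: (boolP (u \in s |: T)) => hb; first exact: hw.
  by rewrite (inAnB hu hb).
have [h1 [h2 h3]] := candZ_ok hZ.
exists (proj A (prept Z)) => //.
have l1 : (PB.1 < (proj T (proj A (prept Z))).1)%N by rewrite h3 /=; apply: ar1.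
have l2 : ((proj T (proj A (prept Z))).1 < PC.1)%N by rewrite h3 /=; apply: ar2.
by rewrite (lvl_ple hDB h2 l1) (lvl_ple h2 hDC l2).
Qed.

Lemma QK2b (PB PC : pt) : PB \in Qs (s |: T) -> PC \in Qs (s' |: T) ->
  exists2 PA, PA \in Qs A & ple (proj T PB) (proj T PA) || ple (proj T PA) (proj T PC).
Proof.
move=> hB hC.
have hDB : proj T PB \in Qs T by exact: proj_sub sTB hB.
have hDC : proj T PC \in Qs T by exact: proj_sub sTC hC.
have hv : hitm s' (PB.1 + (PC.1 + n.+1 - PB.1)).
  rewrite ar5 //.
  by rewrite /hitm modnDr -/(hitm s' PC.1) hitm_ord; apply: (img_Qs hC); rewrite setU11.
have [d [hd1 hd hmiss]] := first_hit hv.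
have ns' : s' \notin s |: T by rewrite !inE negb_or eq_sym ne.
have hU : forall u, u \in s |: T -> hitm u PB.1 by move=> u hu; rewrite hitm_ord; exact: img_Qs hB hu.
have hw := walk ns' hU hmiss.
case: (eqVneq d 0%N) => [d0|d0].
  have hs'1 : in_image (f s') PB.1 by move: hd; rewrite d0 addn0 hitm_ord.
  have [h1 h2] := candB_ok hB hs'1.
  by exists (proj A (mix (s |: T) PB (prept PB.1))) => //; rewrite h2 ple_refl.
case: (boolP (PB.1 + d < n.+1)%N) => lt.
  pose Z : 'I_n.+1 := Ordinal lt.
  have hZ : forall u, u \in A -> in_image (f u) Z.
    move=> u hu; rewrite /Z /= -hitm_small //.
    case: (boolP (u \in s |: T)) => hb; first exact: hw.
    by rewrite (inAnB hu hb).
  have [h1 [h2 h3]] := candZ_ok hZ.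
  exists (proj A (prept Z)) => //.
  have l1 : (PB.1 < (proj T (proj A (prept Z))).1)%N by rewrite h3 /=; apply: ar1.
  by rewrite (lvl_ple hDB h2 l1).
pose z' := (PB.1 + d - n.+1)%N.
have ez : (PB.1 + d = z' + n.+1)%N by exact: ar6.
have lt' : (z' <= PC.1)%N by apply: ar7.
have ltz : (z' < n.+1)%N by exact: leq_ltn_trans lt' (ltn_ord PC.1).
have hper : forall u, hitm u (PB.1 + d) = in_image (f u) z'.
  by move=> u; rewrite ez /hitm modnDr modn_small.
case: (eqVneq z' PC.1) => hz.
  have hi : in_image (f s) PC.1.
    have : hitm s (PB.1 + d) by apply: hw; rewrite setU11.
    by rewrite hper hz.
  have [h1 h2] := candC_ok hC hi.
  by exists (proj A (mix (s' |: T) PC (prept PC.1))) => //; rewrite h2 ple_refl orbT.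
pose Z : 'I_n.+1 := Ordinal ltz.
have hZ : forall u, u \in A -> in_image (f u) Z.
  move=> u hu; rewrite /Z /= -hper.
  case: (boolP (u \in s |: T)) => hb; first exact: hw.
  by rewrite (inAnB hu hb).
have [h1 [h2 h3]] := candZ_ok hZ.
exists (proj A (prept Z)) => //.
have l2 : ((proj T (proj A (prept Z))).1 < PC.1)%N by rewrite h3 /=; apply: ar8.
by rewrite (lvl_ple h2 hDC l2) orbT.
Qed.

End Square.
Lemma enm_in (X : {set S}) (r : 'I_(NQ X).+1) : enmT X r \in Qs X.
Proof. by case: (enm_spec r). Qed.

Lemma enm_id (X : {set S}) (r : 'I_(NQ X).+1) : idxT X (enmT X r) = r.
Proof. by case: (enm_spec r). Qed.

Lemma enm_inj (X : {set S}) (r r' : 'I_(NQ X).+1) : enmT X r = enmT X r' -> r = r'.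
Proof. move=> E; apply: val_inj; by rewrite /= -(enm_id r) E enm_id. Qed.

Lemma phi_le (X Y Z : {set S}) (r : 'I_(NQ Y).+1) (r' : 'I_(NQ Z).+1) :
  X \subset Y -> X \subset Z ->
  (phiT X Y r <= phiT X Z r')%N = ple (proj X (enmT Y r)) (proj X (enmT Z r')).
Proof.
move=> h1 h2; rewrite !phi_val //.
by rewrite (idxT_leE (proj_sub h1 (enm_in r)) (proj_sub h2 (enm_in r'))).
Qed.

Lemma phi_eq (X Y Z : {set S}) (r : 'I_(NQ Y).+1) (r' : 'I_(NQ Z).+1) :
  X \subset Y -> X \subset Z ->
  ((phiT X Y r : nat) = phiT X Z r') -> proj X (enmT Y r) = proj X (enmT Z r').
Proof.
move=> h1 h2; rewrite !phi_val // => e.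
exact: (idxT_inj (proj_sub h1 (enm_in r)) (proj_sub h2 (enm_in r')) e).
Qed.

Lemma ordOf_val (X Y : {set S}) (P : pt) : X \subset Y -> P \in Qs Y ->
  (phiT X Y (inord (idxT Y P)) : nat) = idxT X (proj X P).
Proof. exact: phi_idx. Qed.

Lemma sq_ok (T : {set S}) (s s' : S) : s != s' -> s \notin T -> s' \notin T ->
  lam_pullback (obC (s |: (s' |: T))) (obC (s |: T)) (obC (s' |: T)) (obC T)
    (morC (s |: T) (s |: (s' |: T))) (morC (s' |: T) (s |: (s' |: T)))
    (morC T (s |: T)) (morC T (s' |: T)) /\
  lam_pushout (obC (s |: (s' |: T))) (obC (s |: T)) (obC (s' |: T)) (obC T)
    (morC (s |: T) (s |: (s' |: T))) (morC (s' |: T) (s |: (s' |: T)))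
    (morC T (s |: T)) (morC T (s' |: T)).
Proof.
move=> ne nsT ns'T.
set A := s |: (s' |: T); set B := s |: T; set C := s' |: T.
have hA : A = s |: (s' |: T) by [].
have hA' : A = s' |: (s |: T) by rewrite /A setUCA.
have ne' : s' != s by rewrite eq_sym.
have sBA : B \subset A := sBA hA.
have sCA : C \subset A := sCA hA.
have sTB : T \subset B := sTB T s.
have sTC : T \subset C := sTC T s'.
have sTA : T \subset A := subset_trans sTB sBA.
have hp := phi_hom sBA; have hq := phi_hom sCA.
have hr := phi_hom sTB; have ht := phi_hom sTC.
have comm : forall al, phiT T B (phiT B A al) = phiT T C (phiT C A al).
  by move=> al; rewrite !phi_comp.
have hJ : forall be ga, phiT T B be = phiT T C ga ->
    exists al, phiT B A al = be /\ phiT C A al = ga.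
  move=> be ga /(congr1 val) /(phi_eq sTB sTC) e.
  have [PA hPA [e1 e2]] := QJ ne ns'T hA (enm_in be) (enm_in ga) e.
  exists (inord (idxT A PA)); split; apply: val_inj.
    by rewrite /= ordOf_val // e1 enm_id.
  by rewrite /= ordOf_val // e2 enm_id.
have hU : forall al al', phiT B A al = phiT B A al' -> phiT C A al = phiT C A al' -> al = al'.
  move=> al al' /(congr1 val) /(phi_eq sBA sBA) e1 /(congr1 val) /(phi_eq sCA sCA) e2.
  have E := QU hA (enm_in al) (enm_in al') e1 e2.
  exact: enm_inj E.
split; first exact: dl_pb hp hq hr ht comm hJ hU.
apply: dl_po hp hq hr ht comm hJ _ _ _ _ _ _ _.
- move=> de; case: (QK1 ne (enm_in de)) => [[PB hPB e]|[PC hPC e]].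
    left; exists (inord (idxT B PB)); apply: val_inj.
    by rewrite /= ordOf_val // e enm_id.
  right; exists (inord (idxT C PC)); apply: val_inj.
  by rewrite /= ordOf_val // e enm_id.
- move=> b1 b2 /(congr1 val) /(phi_eq sTB sTB) e nb.
  have nb' : enmT B b1 != enmT B b2.
    apply/eqP => E; apply: nb; exact: enm_inj E.
  have [PC hPC e'] := QK0r ne (enm_in b1) (enm_in b2) e nb'.
  exists (inord (idxT C PC)); apply: val_inj.
  by rewrite /= ordOf_val // e' -phi_val.
- move=> g1 g2 /(congr1 val) /(phi_eq sTC sTC) e nb.
  have nb' : enmT C g1 != enmT C g2.
    apply/eqP => E; apply: nb; exact: enm_inj E.
  have [PB hPB e'] := QK0r ne' (enm_in g1) (enm_in g2) e nb'.
  exists (inord (idxT B PB)); apply: val_inj.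
  by rewrite /= ordOf_val // e' -phi_val.
- move=> be ga lt.
  have le1 : ple (proj T (enmT B be)) (proj T (enmT C ga)) by rewrite -phi_le // ltnW.
  have ne1 : proj T (enmT B be) != proj T (enmT C ga).
    by apply/eqP => E; move: lt; rewrite !phi_val // E ltnn.
  have [PA hPA /andP [l1 l2]] := QK2a ne ns'T hA (enm_in be) (enm_in ga) le1 ne1.
  exists (inord (idxT A PA)); rewrite phi_comp // !phi_le // inordK ?idxT_lt // enm_idx //;
  by split.
- move=> be ga.
  have [PA hPA /orP [l|l]] := QK2b ne ns'T hA (enm_in be) (enm_in ga);
    exists (inord (idxT A PA)); rewrite phi_comp // !phi_le // inordK ?idxT_lt // enm_idx //;
    by [left|right].
- move=> be ga lt.
  have le1 : ple (proj T (enmT C ga)) (proj T (enmT B be)) by rewrite -phi_le // ltnW.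
  have ne1 : proj T (enmT C ga) != proj T (enmT B be).
    by apply/eqP => E; move: lt; rewrite !phi_val // E ltnn.
  have [PA hPA /andP [l1 l2]] := QK2a ne' nsT hA' (enm_in ga) (enm_in be) le1 ne1.
  exists (inord (idxT A PA)); rewrite phi_comp // !phi_le // inordK ?idxT_lt // enm_idx //;
  by split.
- move=> be ga.
  have [PA hPA /orP [l|l]] := QK2b ne' nsT hA' (enm_in ga) (enm_in be);
    exists (inord (idxT A PA)); rewrite phi_comp // !phi_le // inordK ?idxT_lt // enm_idx //;
    by [left|right].
Qed.

Lemma backward : exists (ob : {set S} -> nat) (mor : {set S} -> {set S} -> int -> int),
  [/\ lam_cube ob mor, extends_claw f ob mor, strongly_cartesian ob mor & strongly_cocartesian ob mor].
Proof.
exists obC, morC; split.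
- exact: cube_ok.
- exact: ext_ok.
- by move=> T s s' ne h1 h2; case: (sq_ok ne h1 h2).
- by move=> T s s' ne h1 h2; case: (sq_ok ne h1 h2).
Qed.

End Cube.

Local Close Scope ring_scope.
Unset Implicit Arguments.

Theorem proposition4p2p4 (S : finType) (n : nat) (m : S -> nat)
    (f : forall s : S, 'I_(m s).+1 -> 'I_n.+1)
    (hf : forall s : S, delta_hom (f s)) :
  (exists (ob : {set S} -> nat) (mor : {set S} -> {set S} -> int -> int),
     [/\ lam_cube ob mor, extends_claw f ob mor,
         strongly_cartesian ob mor & strongly_cocartesian ob mor])
  <-> cyclically_compatible f.
Proof.
split.
  move=> [ob [mor [H E SC SCC]]].
  exact: (forward hf H E SC SCC).
move=> hc.
exact: (backward hf hc).
Qed.
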